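(* The map $W:\mathcal{Q}_+/\mathrm{SL}_2(\mathbb{Z})\to \{L,R\}^*_{\mathrm{prim}}/{\sim}$ given by \[ [Q]\mapsto W(Q)=L^{c_1}R^{c_2}\cdots L^{c_{2\ell-1}}R^{c_{2\ell}}, \] where $(c_1,\dots,c_{2\ell})$ is the periodic part of the continued fraction expansion $w_Q=[a_1,\dots,a_{2k},\overline{c_1,\dots,c_{2\ell}}]$ described below, is well-defined. Moreover, its image consists of all classes in $\{L,R\}^*_{\mathrm{prim}}/{\sim}$ except the classes of the two words $L$ and $R$ of length one.
   Context: $\mathcal{Q}$ is the set of integral binary quadratic forms $Q(x,y)=ax^2+bxy+cy^2$, with right action of $\mathrm{SL}_2(\mathbb{Z})$ given by $(Q\circ\gamma)(x,y)=Q(\alpha x+\beta y,\gamma x+\delta y)$ for $\gamma=\begin{pmatrix}\alpha&\beta\\ \gamma&\delta\end{pmatrix}$; $\mathcal{Q}_+$ is the set of $Q\in\mathcal{Q}$ whose discriminant $D=b^2-4ac$ is positive and not a perfect square (then $a\neq 0$). For $Q\in\mathcal{Q}_+$, $w_Q=\frac{-b+\sqrt{D}}{2a}$. Every real quadratic irrational has an eventually periodic regular continued fraction $[a_1,a_2,\dots]$ ($a_1\in\mathbb{Z}$, $a_j\in\mathbb{Z}_{>0}$ for $j\ge2$); write $w_Q=[a_1,\dots,a_{2k},\overline{c_1,\dots,c_{2\ell}}]$ with a pre-periodic part of even length $2k$ (chosen arbitrarily among valid choices) and ''minimal even period'' $2\ell$: if the minimal period $(c_1,\dots,c_m)$ has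 $m$ even, $2\ell=m$; if $m$ is odd, the period is taken to be the doubled block $(c_1,\dots,c_m,c_1,\dots,c_m)$ and $2\ell=2m$. $\{L,R\}^*_{\mathrm{prim}}$ is the set of finite nonempty words over $\{L,R\}$ that are primitive (not a power $U^k$, $k\ge2$, of a shorter word), and $\sim$ is the equivalence relation of cyclic permutation; $L^c$ denotes $c$ consecutive copies of $L$. *)

(* Defs.v *)
From Stdlib Require Import Reals ZArith Arith List Lia.
Import ListNotations.

(** Integral binary quadratic forms Q(x,y) = a x^2 + b x y + c y^2. *)
Record form : Type := mkForm { fa : Z; fb : Z; fc : Z }.

Definition disc (Q : form) : Z := (fb Q * fb Q - 4 * fa Q * fc Q)%Z.

Definition in_Qplus (Q : form) : Prop :=
  (0 < disc Q)%Z /\ ~ (exists z : Z, (z * z)%Z = disc Q).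

(** Right action (Q o g)(x,y) = Q(al x + be y, ga x + de y). *)
Definition form_act (Q : form) (al be ga de : Z) : form :=
  mkForm (fa Q * al * al + fb Q * al * ga + fc Q * ga * ga)%Z
         (2 * fa Q * al * be + fb Q * (al * de + be * ga) + 2 * fc Q * ga * de)%Z
         (fa Q * be * be + fb Q * be * de + fc Q * de * de)%Z.

Definition SL2_equiv (Q Q' : form) : Prop :=
  exists al be ga de : Z, (al * de - be * ga)%Z = 1%Z /\ Q' = form_act Q al be ga de.

Definition wQ (Q : form) : R :=
  ((- IZR (fb Q) + sqrt (IZR (disc Q))) / (2 * IZR (fa Q)))%R.

(** Regular continued fraction algorithm: complete quotients and partial
    quotients (Int_part = floor).  cf_digit x n = a_{n+1}. *)
Fixpoint cf_rem (x : R) (n : nat) : R :=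
  match n with
  | O => x
  | S m => (/ (cf_rem x m - IZR (Int_part (cf_rem x m))))%R
  end.

Definition cf_digit (x : R) (n : nat) : Z := Int_part (cf_rem x n).

Definition periodic_from (d : nat -> Z) (N p : nat) : Prop :=
  (0 < p)%nat /\ forall n, (N <= n)%nat -> d (n + p)%nat = d n.

Definition min_period (d : nat -> Z) (p : nat) : Prop :=
  (exists N, periodic_from d N p) /\
  forall q, (exists N, periodic_from d N q) -> (p <= q)%nat.

(** A valid choice: pre-period of even length 2k, and c = (c_1,...,c_{2l})
    the minimal even period (doubled minimal period if that one is odd). *)
Definition cf_even_period (x : R) (k : nat) (c : list Z) : Prop :=
  exists m : nat,
    min_period (cf_digit x) m /\
    periodic_from (cf_digit x) (2 * k) m /\
    c = map (fun j => cf_digit x (2 * k + j)%nat)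
            (seq 0 (if Nat.odd m then 2 * m else m)).

Inductive LR : Type := L_ | R_.

(** L^{c_1} R^{c_2} ... L^{c_{2l-1}} R^{c_{2l}} *)
Definition word_of (c : list nat) : list LR :=
  concat (map (fun i => repeat (if Nat.odd i then R_ else L_) (nth i c 0%nat))
              (seq 0 (length c))).

Definition W_rel (Q : form) (w : list LR) : Prop :=
  exists (k : nat) (c : list Z),
    cf_even_period (wQ Q) k c /\ w = word_of (map Z.to_nat c).

Definition cyc_equiv (u v : list LR) : Prop :=
  exists i : nat, v = skipn i u ++ firstn i u.

Definition primitive_word (u : list LR) : Prop :=
  u <> [] /\ forall (U : list LR) (k : nat), (2 <= k)%nat -> u <> concat (repeat U k).

(* Main.v *)
Require Import Defs.
From Stdlib Require Import Reals ZArith Arith List.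
Import ListNotations.
From Stdlib Require Import Lia Lra Classical.

Module C_W1.
Import ListNotations.
Import Defs.
Import ListNotations.

Definition col (b : bool) : LR := if b then R_ else L_.
Fixpoint wo (b : bool) (c : list nat) : list LR :=
  match c with [] => [] | x :: r => repeat (col b) x ++ wo (negb b) r end.

Lemma word_of_gen : forall c o,
  concat (map (fun i => repeat (if Nat.odd (o + i) then R_ else L_) (nth i c 0%nat))
              (seq 0 (length c))) = wo (Nat.odd o) c.
Proof.
  induction c as [|x r IH]; intros o; [reflexivity|].
  simpl length. simpl seq. rewrite <- seq_shift. simpl map. rewrite map_map. simpl concat.
  rewrite Nat.add_0_r. cbn [wo]. unfold col. f_equal.
  rewrite Nat.negb_odd, <- Nat.odd_succ, <- (IH (S o)).
  f_equal. apply map_ext. intros i. rewrite Nat.add_succ_r. reflexivity.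
Qed.

Lemma word_of_wo : forall c, word_of c = wo false c.
Proof. intros c. unfold word_of. exact (word_of_gen c 0). Qed.

Lemma wo_app : forall u v b,
  wo b (u ++ v) = wo b u ++ wo (if Nat.even (length u) then b else negb b) v.
Proof.
  induction u as [|x u IH]; intros v b; [reflexivity|].
  cbn [wo app length]. rewrite IH, app_assoc. f_equal.
  replace (Nat.even (S (length u))) with (Nat.odd (length u)) by (rewrite Nat.even_succ; reflexivity).
  rewrite <- Nat.negb_even.
  destruct (Nat.even (length u)), b; reflexivity.
Qed.

Lemma wo_app_even : forall u v b, Nat.even (length u) = true ->
  wo b (u ++ v) = wo b u ++ wo b v.
Proof. intros u v b H. rewrite wo_app, H. reflexivity. Qed.

Definition lpow {A} (V : list A) (q : nat) := concat (repeat V q).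

Lemma pow_S_r : forall {A} (V : list A) q, lpow V (S q) = lpow V q ++ V.
Proof.
  intros A V q. induction q as [|q IH]; unfold lpow in *; simpl.
  - rewrite app_nil_r; reflexivity.
  - simpl in IH. rewrite IH, app_assoc, IH. reflexivity.
Qed.

Lemma wo_pow : forall c q b, Nat.even (length c) = true ->
  wo b (lpow c q) = lpow (wo b c) q.
Proof.
  intros c q b H. induction q as [|q IH]; [reflexivity|].
  unfold lpow in *; simpl. rewrite wo_app_even by exact H. rewrite IH; reflexivity.
Qed.

Definition posl (c : list nat) := Forall (fun x => 1 <= x)%nat c.

Definition notstart (a : LR) (l : list LR) := l = [] \/ exists h t, l = h :: t /\ h <> a.

Lemma run_eq : forall a x x' l l', repeat a x ++ l = repeat a x' ++ l' ->
  notstart a l -> notstart a l' -> x = x' /\ l = l'.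
Proof.
  intros a. induction x as [|x IH]; intros [|x'] l l' E H H'; simpl in *.
  - auto.
  - exfalso. destruct H as [H|(h&t&H1&H2)]; rewrite ?H, ?H1 in E; [discriminate|].
    injection E; intros; subst; auto.
  - exfalso. destruct H' as [H'|(h&t&H1&H2)]; rewrite ?H', ?H1 in E; [discriminate|].
    injection E; intros; subst; auto.
  - injection E; intros E'. destruct (IH x' l l' E' H H'). split; auto.
Qed.


Lemma wo_head : forall b c, posl c -> notstart (col (negb b)) (wo b c).
Proof.
  intros b [|x r] P; simpl; [left; reflexivity|].
  inversion P; subst. destruct x; [lia|]. simpl. right. exists (col b), (repeat (col b) x ++ wo (negb b) r).
  split; [reflexivity|]. destruct b; simpl; discriminate.
Qed.

Lemma wo_inj : forall c c' b, posl c -> posl c' -> wo b c = wo b c' -> c = c'.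
Proof.
  induction c as [|x r IH]; intros [|x' r'] b P P' E; simpl in *; auto.
  - inversion P'; subst. destruct x'; [lia|]. discriminate.
  - inversion P; subst. destruct x; [lia|]. discriminate.
  - inversion P; inversion P'; subst.
    assert (N1 := wo_head (negb b) r H2). assert (N2 := wo_head (negb b) r' H6).
    rewrite Bool.negb_involutive in N1, N2.
    destruct (run_eq _ _ _ _ _ E N1 N2) as [-> E2].
    f_equal. eapply IH; eauto.
Qed.

End C_W1.
Import C_W1.

Module C_W2.
Import ListNotations.
Import Defs.
Import ListNotations.

Lemma no_RL : forall x y U0 l1, repeat L_ x ++ repeat R_ y <> (U0 ++ [R_]) ++ L_ :: l1.
Proof.
  intros x y U0 l1 E. apply app_eq_app in E as [m [[E1 E2]|[E1 E2]]].
  - assert (In R_ (repeat L_ x)) by (rewrite E1; apply in_or_app; left; apply in_or_app; right; left; auto).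
    apply repeat_spec in H; discriminate.
  - assert (In L_ (repeat R_ y)) by (rewrite E2; apply in_or_app; right; left; auto).
    apply repeat_spec in H; discriminate.
Qed.

Lemma ends_R : forall X l U0, l <> [] -> U0 ++ [R_] = X ++ l -> exists l0, l = l0 ++ [R_].
Proof.
  intros X l U0 Hl E. destruct (exists_last Hl) as (l0 & a & ->).
  rewrite app_assoc in E. apply app_inj_tail in E as [_ ->]. eauto.
Qed.

Lemma split_lem : forall n c, length c <= n -> posl c -> Nat.even (length c) = true ->
  forall U V, wo false c = U ++ V -> (U = [] \/ exists U0, U = U0 ++ [R_]) ->
  (V = [] \/ exists V0, V = L_ :: V0) ->
  exists c1 c2, c = c1 ++ c2 /\ Nat.even (length c1) = true /\ wo false c1 = U /\ wo false c2 = V.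
Proof.
  induction n as [|n IH]; intros c Hn P Ev U V E HU HV.
  - destruct c; [|simpl in Hn; lia]. simpl in E. symmetry in E.
    apply app_eq_nil in E as [-> ->]. exists [], []; auto.
  - destruct HU as [->|[U0 HU]].
    { exists [], c; auto. }
    destruct c as [|x [|y r]].
    + simpl in E. symmetry in E. apply app_eq_nil in E as [-> ->]. exists [], []; auto.
    + simpl in Ev. discriminate.
    + apply Forall_cons_iff in P as [Px P1]. apply Forall_cons_iff in P1 as [Py Pr].
      simpl in E. rewrite app_assoc in E.
      apply app_eq_app in E as [l [[E1 E2]|[E1 E2]]].
      * destruct l as [|h t].
        -- rewrite app_nil_r in E1. exists [x; y], r. repeat split; auto.
           simpl. rewrite app_nil_r. auto.
        -- exfalso. destruct HV as [HV|[V0 HV]]; rewrite HV in E2; [discriminate|].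
           simpl in E2. assert (h = L_) by congruence. subst h. rewrite HU in E1. eapply no_RL; eauto.
      *
        assert (Hl : l = [] \/ exists l0, l = l0 ++ [R_]).
        { destruct l as [|h t]; [left; auto|right]. eapply ends_R; [discriminate|]. rewrite <- E1. symmetry; exact HU. }
        destruct (IH r ltac:(simpl in Hn; lia) Pr ltac:(simpl in Ev; exact Ev) l V E2 Hl HV)
          as (c1 & c2 & -> & Ev1 & W1 & W2).
        exists (x :: y :: c1), c2. repeat split; auto.
        simpl. rewrite W1, E1, app_assoc. reflexivity.
Qed.

Lemma runs : forall (a : LR) v, exists n v', v = repeat a n ++ v' /\ notstart a v'.
Proof.
  intros a. induction v as [|h t IH].
  - exists 0, []. split; [reflexivity|left; reflexivity].
  - destruct (classic (h = a)) as [->|Hh].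
    + destruct IH as (n & v' & -> & H). exists (S n), v'. auto.
    + exists 0, (h :: t). split; [reflexivity|right; eauto].
Qed.

Lemma encode : forall n v, length v <= n ->
  (v = [] \/ ((exists v0, v = L_ :: v0) /\ (exists v1, v = v1 ++ [R_]))) ->
  exists c, posl c /\ Nat.even (length c) = true /\ wo false c = v.
Proof.
  induction n as [|n IH]; intros v Hn Hv.
  - destruct v; [|simpl in Hn; lia]. exists []. repeat split; constructor.
  - destruct Hv as [->|[[v0 Hv0] [v1 Hv1]]].
    { exists []. repeat split; constructor. }
    destruct (runs L_ v) as (a & v2 & E & N).
    destruct a as [|a].
    { exfalso. simpl in E. destruct N as [N|(h&t&N1&N2)]; subst; [discriminate|].
      injection N1; intros; subst; auto. }
    destruct N as [N|(h&t&N1&N2)].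
    { exfalso. subst v2. rewrite app_nil_r in E. assert (In R_ v) by (rewrite Hv1; apply in_or_app; right; left; auto).
      rewrite E in H. apply repeat_spec in H. discriminate. }
    assert (h = R_) by (destruct h; congruence). subst h.
    destruct (runs R_ v2) as (b & v3 & E2 & N3).
    destruct b as [|b].
    { exfalso. simpl in E2. rewrite N1 in E2. destruct N3 as [N3|(h&t'&N4&N5)]; subst; [discriminate|].
      injection N4; intros; subst; auto. }
    assert (Hv3 : v3 = [] \/ ((exists v0, v3 = L_ :: v0) /\ (exists v1, v3 = v1 ++ [R_]))).
    { destruct v3 as [|h3 t3]; [left; auto|right]. split.
      - destruct N3 as [N3|(h&t'&N4&N5)]; [discriminate|]. injection N4; intros; subst.
        destruct h; [eauto|congruence].
      - eapply ends_R; [discriminate|]. rewrite <- Hv1, E, E2, app_assoc. reflexivity. }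
    destruct (IH v3) as (c & Pc & Ec & Wc); [|exact Hv3|].
    { assert (length v = S a + (S b + length v3)).
      { rewrite E, E2, !length_app, !repeat_length. reflexivity. }
      lia. }
    exists (S a :: S b :: c). repeat split.
    + constructor; [lia|]. constructor; [lia|]. exact Pc.
    + simpl. exact Ec.
    + simpl. rewrite Wc. rewrite E, E2. reflexivity.
Qed.

Lemma pow_rot1 : forall {A} (b : A) V0 q,
  b :: (lpow (V0 ++ [b]) q ++ V0) = lpow (b :: V0) (S q).
Proof.
  intros A b V0 q. induction q as [|q IH].
  - unfold lpow; simpl. rewrite app_nil_r. reflexivity.
  - unfold lpow in *. simpl in *. rewrite <- IH. simpl.
    rewrite <- !app_assoc. reflexivity.
Qed.

Lemma rot_pow : forall A B : list LR, (exists V q, 2 <= q /\ B ++ A = lpow V q) ->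
  exists V q, 2 <= q /\ A ++ B = lpow V q.
Proof.
  intros A. induction A as [|a A0 IH] using rev_ind; intros B (V & q & Hq & E).
  - rewrite app_nil_r in E. exists V, q. auto.
  - assert (HV : V <> []).
    { intro HV. subst V. assert (lpow (@nil LR) q = []) by (unfold lpow; clear; induction q; simpl; auto).
      rewrite H in E. apply (f_equal (@length LR)) in E. rewrite !length_app in E. simpl in E. lia. }
    destruct (exists_last HV) as (V0 & b & EV0).
    destruct q as [|q]; [lia|]. rewrite pow_S_r, EV0 in E.
    assert (E3 : (B ++ A0) ++ [a] = (lpow (V0 ++ [b]) q ++ V0) ++ [b]) by (rewrite <- !app_assoc; exact E).
    clear E. apply app_inj_tail in E3 as [E ->].
    assert (E' : (b :: B) ++ A0 = lpow (b :: V0) (S q)).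
    { rewrite <- pow_rot1. simpl. rewrite E. reflexivity. }
    destruct (IH (b :: B)) as (V2 & q2 & Hq2 & E2); [exists (b :: V0), (S q); auto|].
    exists V2, q2. split; auto. rewrite <- app_assoc. exact E2.
Qed.

End C_W2.
Import C_W2.

Module C_R1.
Import ListNotations.
Import Defs.
Import ListNotations.
Local Open Scope R_scope.

Lemma Int_part_eq : forall r z, IZR z <= r < IZR z + 1 -> Int_part r = z.
Proof. intros r z H. symmetry. apply Int_part_spec. lra. Qed.

Lemma cf_rem_add : forall x i j, cf_rem x (i + j) = cf_rem (cf_rem x i) j.
Proof.
  intros x i j. induction j as [|j IH]; simpl.
  - rewrite Nat.add_0_r. reflexivity.
  - rewrite Nat.add_succ_r. simpl. rewrite IH. reflexivity.
Qed.

Definition NI (x : R) := forall n z, cf_rem x n <> IZR z.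

Lemma NI_shift : forall x i, NI x -> NI (cf_rem x i).
Proof. intros x i H n z. rewrite <- cf_rem_add. apply H. Qed.

Lemma frac_bounds : forall r, (forall z, r <> IZR z) ->
  IZR (Int_part r) < r < IZR (Int_part r) + 1.
Proof.
  intros r H. destruct (base_Int_part r) as [H1 H2].
  assert (IZR (Int_part r) <> r) by (intro E; apply (H (Int_part r)); auto).
  lra.
Qed.

Lemma cf_rem_S : forall x n, cf_rem x (S n) = / (cf_rem x n - IZR (Int_part (cf_rem x n))).
Proof. reflexivity. Qed.

Lemma cf_rem_gt1 : forall x n, NI x -> 1 < cf_rem x (S n).
Proof.
  intros x n H. rewrite cf_rem_S.
  destruct (frac_bounds (cf_rem x n) (H n)) as [H1 H2].
  set (u := cf_rem x n - IZR (Int_part (cf_rem x n))).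
  assert (0 < u < 1) by (unfold u; lra).
  rewrite <- Rinv_1. apply Rinv_lt_contravar; lra.
Qed.

Lemma Int_part_ge1 : forall r, 1 <= r -> (1 <= Int_part r)%Z.
Proof.
  intros r H. destruct (base_Int_part r) as [H1 H2].
  assert (0 < IZR (Int_part r)) by lra. apply lt_IZR in H0. lia.
Qed.

Lemma digit_ge1 : forall x n, NI x -> (1 <= cf_digit x (S n))%Z.
Proof. intros. unfold cf_digit. apply Int_part_ge1. left. apply cf_rem_gt1; auto. Qed.

Definition rel (x y : R) := exists i j, Nat.even i = Nat.even j /\ cf_rem x i = cf_rem y j.

Lemma rel_refl : forall x, rel x x.
Proof. intros x. exists 0%nat, 0%nat. auto. Qed.

Lemma rel_sym : forall x y, rel x y -> rel y x.
Proof. intros x y (i & j & H1 & H2). exists j, i. auto. Qed.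

Lemma rel_trans : forall x y z, rel x y -> rel y z -> rel x z.
Proof.
  intros x y z (i & j & H1 & H2) (j' & l & H3 & H4).
  exists (i + j')%nat, (l + j)%nat. split.
  - rewrite !Nat.even_add. rewrite H1, H3. destruct (Nat.even j), (Nat.even l); reflexivity.
  - rewrite !cf_rem_add, H2, <- H4, <- !cf_rem_add, Nat.add_comm. reflexivity.
Qed.

Lemma rel_transl : forall x b, (forall z, x <> IZR z) -> rel x (x - IZR b).
Proof.
  intros x b H. exists 1%nat, 1%nat. split; [reflexivity|]. simpl.
  destruct (frac_bounds x H).
  rewrite (Int_part_eq (x - IZR b) (Int_part x - b)).
  - rewrite minus_IZR. f_equal. ring.
  - rewrite minus_IZR. lra.
Qed.

Lemma G_lemma : forall X, 1 < X -> NI X ->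
  exists i j, Nat.even i <> Nat.even j /\ cf_rem (1 + / (X - 1)) i = cf_rem X j.
Proof.
  intros X HX NX.
  assert (HX0 := NX 0%nat). simpl in HX0.
  destruct (frac_bounds X HX0) as [B1 B2].
  assert (Ha : (1 <= Int_part X)%Z) by (apply Int_part_ge1; lra).
  set (a := Int_part X) in *.
  destruct (Z.eq_dec a 1) as [Ea|Ea].
  -
    exists 1%nat, 2%nat. split; [discriminate|].
    assert (E1 : cf_rem X 1 = / (X - 1)) by (simpl; fold a; rewrite Ea; reflexivity).
    assert (N1 := NX 1%nat).
    assert (NI1 : forall z, cf_rem X 1 <> IZR z) by (intro z; apply NX).
    destruct (frac_bounds _ NI1) as [C1 C2].
    simpl cf_rem at 1. rewrite <- E1.
    rewrite (Int_part_eq (1 + cf_rem X 1) (1 + Int_part (cf_rem X 1))).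
    + change (cf_rem X 2) with (/ (cf_rem X 1 - IZR (Int_part (cf_rem X 1)))).
      rewrite plus_IZR. f_equal. ring.
    + rewrite plus_IZR. lra.
  - exists 2%nat, 1%nat. split; [discriminate|].
    assert (HX2 : 2 < X).
    { assert (IZR 2 <= IZR a) by (apply IZR_le; lia). destruct (Req_dec X 2) as [E|E].
      - exfalso. apply (HX0 2%Z). exact E.
      - lra. }
    assert (Hi : 0 < / (X - 1) < 1).
    { split. apply Rinv_0_lt_compat; lra. rewrite <- Rinv_1. apply Rinv_lt_contravar; lra. }
    assert (E1 : cf_rem (1 + / (X - 1)) 1 = X - 1).
    { simpl. rewrite (Int_part_eq _ 1) by lra. replace (1 + / (X - 1) - IZR 1) with (/ (X - 1)) by (simpl; ring).
      rewrite Rinv_inv. reflexivity. }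
    change (cf_rem (1 + / (X - 1)) 2) with (/ (cf_rem (1 + / (X - 1)) 1 - IZR (Int_part (cf_rem (1 + / (X - 1)) 1)))).
    rewrite E1. rewrite (Int_part_eq (X - 1) (a - 1)).
    + simpl. fold a. rewrite minus_IZR. f_equal. ring.
    + rewrite minus_IZR. lra.
Qed.

Lemma inv_rel_pos : forall x, 0 < x -> NI x -> rel x (- / x).
Proof.
  intros x Hx NX.
  assert (HX0 := NX 0%nat). simpl in HX0.
  destruct (Rlt_or_le 1 x) as [H1|H1].
  - destruct (G_lemma x H1 NX) as (i & j & Hp & E).
    exists j, (S i). split.
    + rewrite Nat.even_succ, <- Nat.negb_even. destruct (Nat.even i), (Nat.even j); simpl; congruence.
    + rewrite <- E. change (S i) with (1 + i)%nat. rewrite cf_rem_add. f_equal.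
      simpl. assert (0 < / x < 1).
      { split. apply Rinv_0_lt_compat; lra. rewrite <- Rinv_1. apply Rinv_lt_contravar; lra. }
      rewrite (Int_part_eq _ (-1)) by lra.
      simpl IZR. field_simplify_eq; [ring| try lra; try (split; lra) ..].
  - assert (x <> 1) by (intro E; apply (HX0 1%Z); exact E).
    assert (Hx1 : x < 1) by lra.
    assert (E0 : Int_part x = 0%Z) by (apply Int_part_eq; simpl; lra).
    assert (C1 : cf_rem x 1 = / x) by (simpl; rewrite E0; f_equal; simpl; ring).
    assert (G1 : 1 < cf_rem x 1) by (apply cf_rem_gt1; auto).
    assert (N1 : forall z, cf_rem x 1 <> IZR z) by (intro; apply NX).
    destruct (frac_bounds _ N1) as [F1 F2].
    set (a1 := Int_part (cf_rem x 1)) in *.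
    set (x2 := cf_rem x 2).
    assert (Ex2 : x2 = / (cf_rem x 1 - IZR a1)) by reflexivity.
    assert (G2 : 1 < x2) by (apply cf_rem_gt1; auto).
    assert (NI2 : NI x2) by (apply NI_shift; auto).
    destruct (G_lemma x2 G2 NI2) as (i & j & Hp & E).
    exists (2 + j)%nat, (S i). split.
    + change (Nat.even (2 + j)) with (Nat.even j). rewrite Nat.even_succ, <- Nat.negb_even. destruct (Nat.even i), (Nat.even j); simpl; congruence.
    + rewrite cf_rem_add. fold x2. rewrite <- E. change (S i) with (1 + i)%nat. rewrite cf_rem_add. f_equal.
      simpl. rewrite <- C1.
      rewrite (Int_part_eq _ (- a1 - 1)).
      2: { rewrite minus_IZR, opp_IZR. lra. }
      rewrite Ex2. rewrite minus_IZR, opp_IZR.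
      assert (0 < cf_rem x 1 - IZR a1 < 1) by lra.
      field. lra.
Qed.

Lemma inv_rel : forall x, x <> 0 -> NI x -> NI (- / x) -> rel x (- / x).
Proof.
  intros x Hx NX NY. destruct (Rlt_or_le 0 x) as [H|H].
  - apply inv_rel_pos; auto.
  - assert (x < 0) by lra.
    assert (Hy : 0 < - / x) by (apply Ropp_0_gt_lt_contravar; apply Rinv_lt_0_compat; auto).
    apply rel_sym. pose proof (inv_rel_pos (- / x) Hy NY) as K.
    replace (- / - / x) with x in K by (field; auto). exact K.
Qed.

End C_R1.
Import C_R1.

Module C_R2.
Import ListNotations.
Import Defs.
Import ListNotations.
Local Open Scope R_scope.

Fixpoint phi (l : list Z) (t : R) : R :=
  match l with [] => t | a :: r => IZR a + / phi r t end.
Definition posz (l : list Z) := Forall (fun a => (1 <= a)%Z) l.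

Lemma phi_gt1 : forall l t, 1 < t -> posz l -> 1 < phi l t.
Proof.
  induction l as [|a r IH]; intros t Ht P; simpl; auto.
  apply Forall_cons_iff in P as [Pa Pr]. specialize (IH t Ht Pr).
  apply IZR_le in Pa. assert (0 < / phi r t) by (apply Rinv_0_lt_compat; lra). lra.
Qed.

Lemma phi_pos : forall l t, 0 < t -> posz l -> 0 < phi l t.
Proof.
  induction l as [|a r IH]; intros t Ht P; simpl; auto.
  apply Forall_cons_iff in P as [Pa Pr]. specialize (IH t Ht Pr).
  apply IZR_le in Pa. assert (0 < / phi r t) by (apply Rinv_0_lt_compat; lra). lra.
Qed.

Lemma phi_cons_gt1 : forall a r t, 0 < t -> posz (a :: r) -> 1 < phi (a :: r) t.
Proof.
  intros a r t Ht P. simpl. apply Forall_cons_iff in P as [Pa Pr].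
  assert (H := phi_pos r t Ht Pr).
  apply IZR_le in Pa. assert (0 < / phi r t) by (apply Rinv_0_lt_compat; lra). lra.
Qed.

Lemma phi_cf : forall l t, 1 < t -> posz l ->
  (forall j, (j < length l)%nat -> IZR (nth j l 0%Z) < cf_rem (phi l t) j < IZR (nth j l 0%Z) + 1)
  /\ cf_rem (phi l t) (length l) = t.
Proof.
  induction l as [|a r IH]; intros t Ht P.
  - split; [intros j Hj; simpl in Hj; lia|reflexivity].
  - apply Forall_cons_iff in P as [Pa Pr].
    destruct (IH t Ht Pr) as [IH1 IH2].
    assert (Hp := phi_gt1 r t Ht Pr).
    assert (Hi : 0 < / phi r t < 1).
    { split. apply Rinv_0_lt_compat; lra. rewrite <- Rinv_1. apply Rinv_lt_contravar; lra. }
    assert (E1 : cf_rem (phi (a :: r) t) 1 = phi r t).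
    { simpl. rewrite (Int_part_eq _ a) by lra.
      replace (IZR a + / phi r t - IZR a) with (/ phi r t) by ring. apply Rinv_inv. }
    split.
    + intros [|j] Hj.
      * simpl. lra.
      * change (S j) with (1 + j)%nat. rewrite cf_rem_add, E1. apply IH1. simpl in Hj. lia.
    + change (length (a :: r)) with (1 + length r)%nat. rewrite cf_rem_add, E1. exact IH2.
Qed.

Lemma rational_not_NI : forall x, NI x -> forall p q, (0 < q)%Z -> x <> IZR p / IZR q.
Proof.
  intros x NX p q Hq Ex.
  assert (Cl : forall n, exists p' q', (0 < q')%Z /\ (q' + Z.of_nat n <= q)%Z /\
                          cf_rem x n = IZR p' / IZR q').
  { induction n as [|n IH].
    - exists p, q. repeat split; auto. lia.
    - destruct IH as (p' & q' & H1 & H2 & H3).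
      assert (N := NX n). destruct (frac_bounds _ N) as [F1 F2].
      set (a := Int_part (cf_rem x n)) in *.
      rewrite H3 in F1, F2.
      assert (Q' : 0 < IZR q') by (apply IZR_lt; auto).
      assert (K1 : IZR a * IZR q' < IZR p').
      { apply (Rmult_lt_compat_r (IZR q')) in F1; auto. field_simplify in F1; lra. }
      assert (K2 : IZR p' < IZR a * IZR q' + IZR q').
      { apply (Rmult_lt_compat_r (IZR q')) in F2; auto. field_simplify in F2; lra. }
      rewrite <- mult_IZR in K1, K2. rewrite <- plus_IZR in K2.
      apply lt_IZR in K1. apply lt_IZR in K2.
      exists q', (p' - a * q')%Z. repeat split; [lia|lia|].
      rewrite cf_rem_S. fold a. rewrite H3. rewrite minus_IZR, mult_IZR.
      assert (0 < IZR p' - IZR a * IZR q') by (rewrite <- mult_IZR, <- minus_IZR; apply IZR_lt; lia).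
      field. split; lra. }
  destruct (Cl (Z.to_nat q)) as (p' & q' & H1 & H2 & _). lia.
Qed.

End C_R2.
Import C_R2.

Module C_F1.
Import ListNotations.
Import Defs.
Import ListNotations.
Import Defs.
Local Open Scope R_scope.

Lemma key_alg : forall A B C a s, A <> 0 -> A*a*a + B*a + C <> 0 -> s*s = B*B - 4*A*C ->
  / ((- B + s) / (2 * A) - a) = (- - (2*A*a + B) + s) / (2 * - (A*a*a + B*a + C)).
Proof.
  intros A B C a s HA HF Hs.
  set (K := B + 2*A*a). set (F := A*a*a + B*a + C) in *.
  assert (P : (s - K) * (K + s) = -4*A*F).
  { unfold K, F. replace ((s - (B + 2 * A * a)) * (B + 2 * A * a + s)) with (s*s - (B + 2*A*a)*(B+2*A*a)) by ring.
    rewrite Hs. ring. }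
  assert (N1 : s - K <> 0). { intro E. rewrite E in P. assert (A * F = 0) by lra. apply Rmult_integral in H. tauto. }
  assert (N2 : K + s <> 0). { intro E. rewrite E in P. assert (A * F = 0) by lra. apply Rmult_integral in H. tauto. }
  replace ((- B + s) / (2 * A) - a) with ((s - K) / (2*A)) by (unfold K; field; auto).
  replace (- - (2*A*a + B) + s) with (K + s) by (unfold K; ring).
  rewrite <- (Rinv_inv ((K + s) / (2 * - F))). f_equal.
  field_simplify_eq; [rewrite <- P; ring|repeat split; auto].
Qed.

Definition sD (f : form) := sqrt (IZR (disc f)).
Definition wQc (f : form) : R := ((- IZR (fb f) - sqrt (IZR (disc f))) / (2 * IZR (fa f)))%R.

Lemma IZR_disc : forall f, IZR (disc f) = IZR (fb f) * IZR (fb f) - 4 * IZR (fa f) * IZR (fc f).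
Proof. intros f. unfold disc. rewrite minus_IZR, !mult_IZR. reflexivity. Qed.

Section Qp.
Variable f : form.
Hypothesis Hf : in_Qplus f.

Lemma sD_sq : sD f * sD f = IZR (disc f).
Proof. unfold sD. apply sqrt_sqrt. destruct Hf as [H _]. apply IZR_lt in H. lra. Qed.

Lemma sD_pos : 0 < sD f.
Proof. unfold sD. apply sqrt_lt_R0. destruct Hf as [H _]. apply IZR_lt in H. lra. Qed.

Lemma sD_not_int : forall z, sD f <> IZR z.
Proof.
  intros z E. destruct Hf as [_ H]. apply H. exists z.
  apply eq_IZR. rewrite mult_IZR, <- E. apply sD_sq.
Qed.

Lemma sD_not_int' : forall z, - sD f <> IZR z.
Proof. intros z E. apply (sD_not_int (- z)). rewrite opp_IZR, <- E. ring. Qed.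

Lemma fa_nz : fa f <> 0%Z.
Proof. intros E. destruct Hf as [_ H]. apply H. exists (fb f). unfold disc. rewrite E. ring. Qed.

Lemma fc_nz : fc f <> 0%Z.
Proof. intros E. destruct Hf as [_ H]. apply H. exists (fb f). unfold disc. rewrite E. ring. Qed.

Lemma fval_nz : forall a, (fa f * a * a + fb f * a + fc f <> 0)%Z.
Proof.
  intros a E. destruct Hf as [_ H]. apply H. exists (2 * fa f * a + fb f)%Z.
  unfold disc. replace (fc f) with (- (fa f * a * a + fb f * a))%Z by lia. ring.
Qed.

Lemma gen_not_int : forall s z, s * s = IZR (disc f) -> (forall z, s <> IZR z) ->
  (- IZR (fb f) + s) / (2 * IZR (fa f)) <> IZR z.
Proof.
  intros s z Hs Hn E. apply (Hn (2 * fa f * z + fb f)%Z).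
  assert (IZR (fa f) <> 0) by (apply not_0_IZR; apply fa_nz).
  rewrite plus_IZR, !mult_IZR. rewrite <- E. field. auto.
Qed.

Lemma wQ_not_int : forall z, wQ f <> IZR z.
Proof. intros z. apply gen_not_int; [apply sD_sq|apply sD_not_int]. Qed.

Lemma wQc_not_int : forall z, wQc f <> IZR z.
Proof.
  intros z. unfold wQc. replace (- IZR (fb f) - sqrt (IZR (disc f))) with (- IZR (fb f) + - sD f) by (unfold sD; ring).
  apply gen_not_int; [|apply sD_not_int']. rewrite <- sD_sq. ring.
Qed.

End Qp.

Definition step (f : form) (a : Z) : form :=
  mkForm (- (fa f * a * a + fb f * a + fc f))%Z (- (2 * fa f * a + fb f))%Z (- fa f)%Z.

Lemma disc_step : forall f a, disc (step f a) = disc f.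
Proof. intros. unfold disc, step; cbn [fa fb fc]. ring. Qed.

Lemma Qplus_step : forall f a, in_Qplus f -> in_Qplus (step f a).
Proof. intros f a H. unfold in_Qplus. rewrite disc_step. exact H. Qed.

Lemma gen_step : forall f a s, in_Qplus f -> s * s = IZR (disc f) ->
  / ((- IZR (fb f) + s) / (2 * IZR (fa f)) - IZR a) =
  (- IZR (fb (step f a)) + s) / (2 * IZR (fa (step f a))).
Proof.
  intros f a s Hf Hs. unfold step; cbn [fa fb fc].
  rewrite !opp_IZR, !plus_IZR, !mult_IZR.
  apply key_alg.
  - apply not_0_IZR, fa_nz; auto.
  - intro E. apply (fval_nz f Hf a). apply eq_IZR. rewrite !plus_IZR, !mult_IZR. exact E.
  - rewrite Hs, IZR_disc. ring.
Qed.

Lemma wQ_step : forall f a, in_Qplus f -> / (wQ f - IZR a) = wQ (step f a).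
Proof.
  intros f a Hf. unfold wQ at 2. rewrite disc_step. apply gen_step; auto. apply sD_sq; auto.
Qed.

Lemma wQc_step : forall f a, in_Qplus f -> / (wQc f - IZR a) = wQc (step f a).
Proof.
  intros f a Hf. unfold wQc. rewrite disc_step.
  replace (- IZR (fb f) - sqrt (IZR (disc f))) with (- IZR (fb f) + - sD f) by (unfold sD; ring).
  replace (- IZR (fb (step f a)) - sqrt (IZR (disc f))) with (- IZR (fb (step f a)) + - sD f) by (unfold sD; ring).
  apply gen_step; auto. rewrite <- sD_sq by auto. ring.
Qed.

Fixpoint Fs (f : form) (n : nat) : form :=
  match n with O => f | S n => step (Fs f n) (Int_part (wQ (Fs f n))) end.

Lemma Fs_Qplus : forall f n, in_Qplus f -> in_Qplus (Fs f n).
Proof. intros f n H. induction n; simpl; auto. apply Qplus_step; auto. Qed.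

Lemma disc_Fs : forall f n, disc (Fs f n) = disc f.
Proof. intros f n. induction n; simpl; auto. rewrite disc_step; auto. Qed.

Lemma cf_rem_Fs : forall f n, in_Qplus f -> cf_rem (wQ f) n = wQ (Fs f n).
Proof.
  intros f n H. induction n as [|n IH]; [reflexivity|].
  rewrite cf_rem_S, IH. simpl. apply wQ_step. apply Fs_Qplus; auto.
Qed.

Lemma NI_wQ : forall f, in_Qplus f -> NI (wQ f).
Proof. intros f H n z. rewrite cf_rem_Fs by auto. apply wQ_not_int, Fs_Qplus; auto. Qed.

End C_F1.
Import C_F1.

Module C_F2.
Import ListNotations.
Import Defs.
Import ListNotations.
Import Defs.
Local Open Scope R_scope.

Lemma diff_xy : forall f, in_Qplus f -> wQ f - wQc f = sD f / IZR (fa f).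
Proof.
  intros f Hf. unfold wQ, wQc, sD. assert (IZR (fa f) <> 0) by (apply not_0_IZR, fa_nz; auto).
  field. auto.
Qed.

Lemma prod_xy : forall f, in_Qplus f -> wQ f * wQc f = IZR (fc f) / IZR (fa f).
Proof.
  intros f Hf. unfold wQ, wQc. assert (IZR (fa f) <> 0) by (apply not_0_IZR, fa_nz; auto).
  fold (sD f).
  replace ((- IZR (fb f) + sD f) / (2 * IZR (fa f)) * ((- IZR (fb f) - sD f) / (2 * IZR (fa f))))
    with ((IZR (fb f) * IZR (fb f) - sD f * sD f) / (4 * IZR (fa f) * IZR (fa f))) by (field; auto).
  rewrite sD_sq, IZR_disc by auto. field. auto.
Qed.

Lemma Rabs_div' : forall u v, Rabs (u / v) = Rabs u / Rabs v.
Proof. intros. unfold Rdiv. rewrite Rabs_mult, Rabs_inv. reflexivity. Qed.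

Lemma sD_Fs : forall f n, sD (Fs f n) = sD f.
Proof. intros. unfold sD. rewrite disc_Fs. reflexivity. Qed.

Lemma nat_descent : forall h : nat -> nat, (forall n, (1 <= n)%nat -> (h (S n) < h n)%nat) -> False.
Proof.
  intros h H. assert (forall k, (h (1 + k) + k <= h 1)%nat).
  { induction k as [|k IH]; [simpl; lia|]. specialize (H (1 + k)%nat ltac:(lia)).
    replace (1 + S k)%nat with (S (1 + k)) by lia. lia. }
  specialize (H0 (S (h 1%nat))). lia.
Qed.

Section Lag.
Variable f : form.
Hypothesis Hf : in_Qplus f.

Let x n := wQ (Fs f n).
Let y n := wQc (Fs f n).
Let a n := Int_part (x n).
Let HFs n : in_Qplus (Fs f n) := Fs_Qplus f n Hf.

Lemma x_gt1 : forall n, (1 <= n)%nat -> 1 < x n.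
Proof.
  intros [|n] Hn; [lia|]. unfold x. rewrite <- cf_rem_Fs by auto. apply cf_rem_gt1, NI_wQ; auto.
Qed.

Lemma a_ge1 : forall n, (1 <= n)%nat -> (1 <= a n)%Z.
Proof. intros n Hn. apply Int_part_ge1. left. apply x_gt1; auto. Qed.

Lemma y_S : forall n, y (S n) = / (y n - IZR (a n)).
Proof. intros n. unfold y, a, x. simpl. rewrite wQc_step; auto. Qed.

Lemma x_S : forall n, x (S n) = / (x n - IZR (a n)).
Proof. intros n. unfold y, a, x. simpl. rewrite wQ_step; auto. Qed.

Lemma y_nz : forall n, y n <> 0.
Proof. intros n E. apply (wQc_not_int _ (HFs n) 0). exact E. Qed.

Lemma exists_neg : exists n0, (1 <= n0)%nat /\ y n0 < 0.
Proof.
  apply NNPP. intro Hc.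
  assert (Hp : forall n, (1 <= n)%nat -> 0 < y n).
  { intros n Hn. destruct (Rlt_or_le 0 (y n)) as [H|H]; auto.
    exfalso. apply Hc. exists n. split; auto. destruct H; auto. exfalso; apply (y_nz n); auto. }
  apply (nat_descent (fun n => Z.abs_nat (fa (Fs f n)))).
  intros n Hn.
  assert (Hx := x_gt1 n Hn). assert (Ha := a_ge1 n Hn). assert (Ha1 := a_ge1 (S n) ltac:(lia)).
  destruct (frac_bounds (x n) (wQ_not_int _ (HFs n))) as [U1 U2]. fold (a n) in U1, U2.
  set (u := x n - IZR (a n)). set (v := y n - IZR (a n)).
  assert (Hu : 0 < u < 1) by (unfold u; lra).
  assert (Hv0 : 0 < v).
  { assert (K := Hp (S n) ltac:(lia)). rewrite y_S in K. fold v in K.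
    destruct (Rlt_or_le 0 v) as [H|H]; auto. destruct H as [H|H].
    - assert (/ v < 0) by (apply Rinv_lt_0_compat; auto). lra.
    - rewrite H, Rinv_0 in K. lra. }
  assert (Hv1 : v < 1).
  { assert (K := Hp (S (S n)) ltac:(lia)). rewrite y_S in K.
    assert (K2 : IZR (a (S n)) < y (S n)).
    { destruct (Rlt_or_le (IZR (a (S n))) (y (S n))) as [H|H]; auto.
      destruct H as [H|H].
      - assert (/ (y (S n) - IZR (a (S n))) < 0) by (apply Rinv_lt_0_compat; lra). lra.
      - rewrite H in K. replace (IZR (a (S n)) - IZR (a (S n))) with 0 in K by ring. rewrite Rinv_0 in K. lra. }
    apply IZR_le in Ha1. rewrite y_S in K2. fold v in K2.
    destruct (Rlt_or_le v 1) as [H|H]; auto.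
    assert (/ v <= 1) by (rewrite <- Rinv_1; apply Rinv_le_contravar; lra). lra. }
  assert (D0 : x n - y n = sD f / IZR (fa (Fs f n))) by (unfold x, y; rewrite diff_xy, sD_Fs; auto).
  assert (D1 : x (S n) - y (S n) = sD f / IZR (fa (Fs f (S n)))) by (unfold x, y; rewrite diff_xy, sD_Fs; auto).
  assert (Hs := sD_pos f Hf).
  assert (A0 : IZR (fa (Fs f n)) <> 0) by (apply not_0_IZR, fa_nz; auto).
  assert (A1 : IZR (fa (Fs f (S n))) <> 0) by (apply not_0_IZR, fa_nz; auto).
  assert (Euv : u - v = x n - y n) by (unfold u, v; ring).
  assert (E1 : x (S n) - y (S n) = (v - u) / (u * v)).
  { rewrite x_S, y_S. fold u v. field. split; lra. }
  assert (Nuv : u - v <> 0).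
  { rewrite Euv, D0. unfold Rdiv. intro E. apply Rmult_integral in E as [E|E]; [lra|].
    apply (Rinv_neq_0_compat _ A0); auto. }
  assert (Kabs : Rabs (u - v) < Rabs (x (S n) - y (S n))).
  { rewrite E1. rewrite Rabs_div'.
    rewrite (Rabs_right (u * v)) by (left; apply Rmult_lt_0_compat; lra).
    replace (v - u) with (- (u - v)) by ring. rewrite Rabs_Ropp.
    assert (0 < Rabs (u - v)) by (apply Rabs_pos_lt; auto).
    assert (u * v < 1).
    { replace 1 with (1 * 1) by ring. apply Rmult_le_0_lt_compat; lra. }
    apply (Rmult_lt_reg_r (u * v)); [apply Rmult_lt_0_compat; lra|].
    unfold Rdiv. rewrite Rmult_assoc, Rinv_l by (apply Rgt_not_eq; apply Rmult_lt_0_compat; lra).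
    assert (Rabs (u - v) * (u * v) < Rabs (u - v) * 1) by (apply Rmult_lt_compat_l; lra). lra. }
  rewrite Euv, D0, D1 in Kabs.
  rewrite !Rabs_div' in Kabs. rewrite (Rabs_right (sD f)) in Kabs by lra.
  rewrite <- !abs_IZR in Kabs.
  assert (P0 : 0 < IZR (Z.abs (fa (Fs f n)))) by (apply IZR_lt; assert (fa (Fs f n) <> 0%Z) by (apply fa_nz; auto); lia).
  assert (P1 : 0 < IZR (Z.abs (fa (Fs f (S n))))) by (apply IZR_lt; assert (fa (Fs f (S n)) <> 0%Z) by (apply fa_nz; auto); lia).
  assert (K : IZR (Z.abs (fa (Fs f (S n)))) < IZR (Z.abs (fa (Fs f n)))).
  { unfold Rdiv in Kabs. apply Rmult_lt_reg_l in Kabs; [|lra].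
    apply Rinv_lt_contravar in Kabs; [|apply Rmult_lt_0_compat; apply Rinv_0_lt_compat; lra].
    rewrite !Rinv_inv in Kabs. exact Kabs. }
  apply lt_IZR in K. lia.
Qed.

Lemma eventually_reduced : exists N, forall n, (N <= n)%nat -> (fa (Fs f n) * fc (Fs f n) < 0)%Z.
Proof.
  destruct exists_neg as (n0 & Hn0 & Hy0).
  assert (Hneg : forall k, y (n0 + k)%nat < 0).
  { induction k as [|k IH]; [rewrite Nat.add_0_r; auto|].
    rewrite Nat.add_succ_r, y_S. apply Rinv_lt_0_compat.
    assert (H := a_ge1 (n0 + k) ltac:(lia)). apply IZR_le in H. lra. }
  exists n0. intros n Hn.
  replace n with (n0 + (n - n0))%nat by lia.
  set (m := (n0 + (n - n0))%nat).
  assert (Hy := Hneg (n - n0)%nat). fold m in Hy.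
  assert (Hx := x_gt1 m ltac:(unfold m; lia)).
  assert (Pr : x m * y m < 0).
  { assert (0 < x m * (- y m)) by (apply Rmult_lt_0_compat; lra). lra. }
  unfold x, y in Pr. rewrite prod_xy in Pr by auto.
  assert (A0 : IZR (fa (Fs f m)) <> 0) by (apply not_0_IZR, fa_nz; auto).
  assert (IZR (fa (Fs f m) * fc (Fs f m)) < 0).
  { rewrite mult_IZR.
    replace (IZR (fa (Fs f m)) * IZR (fc (Fs f m))) with
      (IZR (fc (Fs f m)) / IZR (fa (Fs f m)) * (IZR (fa (Fs f m)) * IZR (fa (Fs f m)))) by (field; auto).
    assert (0 < IZR (fa (Fs f m)) * IZR (fa (Fs f m))).
    { destruct (Rlt_or_le 0 (IZR (fa (Fs f m)))); [nra|]. destruct H; [nra|contradiction]. }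
    nra. }
  apply lt_IZR in H. exact H.
Qed.

End Lag.

End C_F2.
Import C_F2.

Module C_F3.
Import ListNotations.
Import Defs.
Import ListNotations.
Import Defs.

Lemma pigeon : forall {T} (g : nat -> T) K (box : list T), length box <= K ->
  (forall i, i <= K -> In (g i) box) -> exists i j, i < j <= K /\ g i = g j.
Proof.
  intros T g K box Hl Hin. apply NNPP. intro Hc.
  assert (ND : NoDup (map g (seq 0 (S K)))).
  { apply NoDup_map_NoDup_ForallPairs; [|apply seq_NoDup].
    intros i j Hi Hj E. apply in_seq in Hi. apply in_seq in Hj.
    destruct (Nat.lt_trichotomy i j) as [H|[H|H]]; auto; exfalso; apply Hc.
    - exists i, j. split; [lia|auto].
    - exists j, i. split; [lia|auto]. }
  assert (incl (map g (seq 0 (S K))) box).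
  { intros z Hz. apply in_map_iff in Hz as (i & <- & Hi). apply in_seq in Hi. apply Hin. lia. }
  pose proof (NoDup_incl_length ND H). rewrite length_map, length_seq in H0. lia.
Qed.

Definition zr (D : Z) : list Z := map (fun i => (Z.of_nat i - D)%Z) (seq 0 (Z.to_nat (2 * D + 1))).
Definition box (D : Z) : list form :=
  map (fun p => mkForm (fst p) (fst (snd p)) (snd (snd p))) (list_prod (zr D) (list_prod (zr D) (zr D))).

Lemma in_zr : forall D a, (- D <= a <= D)%Z -> In a (zr D).
Proof.
  intros D a H. unfold zr. apply in_map_iff. exists (Z.to_nat (a + D)). split; [lia|].
  apply in_seq. lia.
Qed.

Lemma in_box : forall D f, (Z.abs (fa f) <= D)%Z -> (Z.abs (fb f) <= D)%Z -> (Z.abs (fc f) <= D)%Z ->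
  In f (box D).
Proof.
  intros D [a b c] Ha Hb Hc; simpl in *. unfold box. apply in_map_iff.
  exists (a, (b, c)). split; [reflexivity|].
  apply in_prod; [apply in_zr; lia|]. apply in_prod; apply in_zr; lia.
Qed.

Lemma length_box : forall D, length (box D) = (Z.to_nat (2 * D + 1) * (Z.to_nat (2 * D + 1) * Z.to_nat (2 * D + 1)))%nat.
Proof. intros. unfold box, zr. rewrite length_map, !length_prod, !length_map, !length_seq. reflexivity. Qed.

Lemma bounded : forall A B C D, (A * C < 0)%Z -> (B * B - 4 * A * C = D)%Z ->
  (Z.abs A <= D /\ Z.abs B <= D /\ Z.abs C <= D)%Z.
Proof.
  intros A B C D H1 H2.
  assert (E : (Z.abs A * Z.abs C = - (A * C))%Z) by (rewrite <- Z.abs_mul; lia).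
  assert (HA : (1 <= Z.abs A)%Z) by (destruct (Z.eq_dec A 0); [subst; lia|lia]).
  assert (HC : (1 <= Z.abs C)%Z) by (destruct (Z.eq_dec C 0); [subst; lia|lia]).
  assert (HB : (Z.abs B <= B * B)%Z).
  { rewrite <- (Z.abs_square B). destruct (Z.eq_dec B 0) as [->|Hb]; [simpl; lia|].
    assert (1 <= Z.abs B)%Z by lia. nia. }
  assert (0 <= B * B)%Z by nia.
  split; [|split]; nia.
Qed.

Lemma digit_Fs : forall f n, in_Qplus f -> cf_digit (wQ f) n = Int_part (wQ (Fs f n)).
Proof. intros. unfold cf_digit. rewrite cf_rem_Fs; auto. Qed.

Lemma lagrange : forall f, in_Qplus f -> exists N p, periodic_from (cf_digit (wQ f)) N p.
Proof.
  intros f Hf. destruct (eventually_reduced f Hf) as [N HN].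
  set (D := disc f).
  set (K := length (box D)).
  destruct (pigeon (fun i => Fs f (N + i)) K (box D) (le_n _)) as (i & j & Hij & E).
  { intros i Hi. assert (H := HN (N + i)%nat ltac:(lia)).
    destruct (bounded _ (fb (Fs f (N + i))) _ D H) as (B1 & B2 & B3).
    - unfold D. rewrite <- (disc_Fs f (N + i)). reflexivity.
    - apply in_box; auto. }
  cbv beta in E.
  exists (N + i)%nat, (j - i)%nat. split; [lia|].
  assert (P : forall t, Fs f (N + i + t + (j - i)) = Fs f (N + i + t)).
  { induction t as [|t IH].
    - rewrite Nat.add_0_r. replace (N + i + (j - i))%nat with (N + j)%nat by lia. auto.
    - replace (N + i + S t + (j - i))%nat with (S (N + i + t + (j - i))) by lia.
      replace (N + i + S t)%nat with (S (N + i + t)) by lia. simpl. rewrite IH. reflexivity. }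
  intros n Hn. rewrite !digit_Fs by auto.
  replace n with (N + i + (n - (N + i)))%nat by lia. rewrite P. reflexivity.
Qed.

End C_F3.
Import C_F3.

Module C_F4.
Import ListNotations.
Import Defs.
Import ListNotations.
Import Defs.
Local Open Scope R_scope.

Lemma form_act_comp : forall Q a b c d a' b' c' d',
  form_act (form_act Q a b c d) a' b' c' d' =
  form_act Q (a*a' + b*c') (a*b' + b*d') (c*a' + d*c') (c*b' + d*d').
Proof. intros. unfold form_act; cbn [fa fb fc]. f_equal; ring. Qed.

Lemma disc_act : forall Q a b c d, disc (form_act Q a b c d) = ((a*d - b*c) * (a*d - b*c) * disc Q)%Z.
Proof. intros. unfold disc, form_act; cbn [fa fb fc]. ring. Qed.

Lemma Qplus_act : forall Q a b c d, (a*d - b*c = 1)%Z -> in_Qplus Q -> in_Qplus (form_act Q a b c d).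
Proof. intros Q a b c d H HQ. unfold in_Qplus. rewrite disc_act, H. rewrite !Z.mul_1_l. exact HQ. Qed.

Lemma wQ_transl : forall Q b, in_Qplus Q -> wQ (form_act Q 1 b 0 1) = wQ Q - IZR b.
Proof.
  intros Q b HQ. unfold wQ. rewrite disc_act. replace ((1 * 1 - b * 0) * (1 * 1 - b * 0) * disc Q)%Z with (disc Q) by ring.
  unfold form_act; cbn [fa fb fc].
  replace (fa Q * 1 * 1 + fb Q * 1 * 0 + fc Q * 0 * 0)%Z with (fa Q) by ring.
  replace (2 * fa Q * 1 * b + fb Q * (1 * 1 + b * 0) + 2 * fc Q * 0 * 1)%Z with (2 * fa Q * b + fb Q)%Z by ring.
  assert (IZR (fa Q) <> 0) by (apply not_0_IZR, fa_nz; auto).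
  rewrite plus_IZR, !mult_IZR. field. auto.
Qed.

Lemma act_neg : forall Q b, form_act Q (-1) b 0 (-1) = form_act Q 1 (- b) 0 1.
Proof. intros. unfold form_act. f_equal; ring. Qed.

Lemma act_S : forall Q, form_act Q 0 1 (-1) 0 = mkForm (fc Q) (- fb Q) (fa Q).
Proof. intros. unfold form_act. f_equal; ring. Qed.

Lemma wQ_S : forall Q, in_Qplus Q -> wQ (form_act Q 0 1 (-1) 0) = - / wQ Q.
Proof.
  intros Q HQ. assert (HQ' : in_Qplus (form_act Q 0 1 (-1) 0)) by (apply Qplus_act; auto; lia).
  rewrite act_S in *. unfold wQ. unfold disc at 1; cbn [fa fb fc].
  replace (- fb Q * - fb Q - 4 * fc Q * fa Q)%Z with (disc Q) by (unfold disc; ring).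
  fold (sD Q).
  assert (A : IZR (fa Q) <> 0) by (apply not_0_IZR, fa_nz; auto).
  assert (C : IZR (fc Q) <> 0) by (apply not_0_IZR, fc_nz; auto).
  assert (S1 : - IZR (fb Q) + sD Q <> 0).
  { intro E. apply (sD_not_int Q HQ (fb Q)). lra. }
  rewrite opp_IZR.
  assert (Hs := sD_sq Q HQ). rewrite IZR_disc in Hs.
  field_simplify_eq; [|split; auto].
  replace (sD Q ^ 2) with (sD Q * sD Q) by ring. rewrite Hs. ring.
Qed.

Lemma sl2_rel : forall n Q a b c d, Z.abs_nat c = n -> in_Qplus Q -> (a*d - b*c = 1)%Z ->
  rel (wQ Q) (wQ (form_act Q a b c d)).
Proof.
  intros n. induction n as [n IH] using lt_wf_ind. intros Q a b c d Hn HQ Hdet.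
  destruct (Z.eq_dec c 0) as [->|Hc].
  - rewrite Z.mul_0_r, Z.sub_0_r in Hdet.
    assert (Hb : form_act Q a b 0 d = form_act Q 1 (a * b) 0 1).
    { destruct (Z.eq_mul_1 _ _ Hdet) as [->| ->].
      - replace d with 1%Z by lia. f_equal; ring.
      - replace d with (-1)%Z by lia. rewrite act_neg. f_equal; ring. }
    rewrite Hb, wQ_transl by auto. apply rel_transl. apply wQ_not_int; auto.
  - set (q := (a / c)%Z). set (r := (a mod c)%Z).
    assert (Ha : a = (c * q + r)%Z) by (apply Z.div_mod; auto).
    assert (Hr : (Z.abs r < Z.abs c)%Z).
    { destruct (Z.lt_ge_cases 0 c).
      - pose proof (Z.mod_pos_bound a c H). unfold r. lia.
      - pose proof (Z.mod_neg_bound a c ltac:(lia)). unfold r. lia. }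
    set (Q1 := form_act Q 1 q 0 1).
    set (Q2 := form_act Q1 0 1 (-1) 0).
    assert (HQ1 : in_Qplus Q1) by (apply Qplus_act; auto; lia).
    assert (HQ2 : in_Qplus Q2) by (apply Qplus_act; auto; lia).
    assert (Edec : form_act Q a b c d = form_act Q2 (- c) (- d) r (b - q * d)).
    { unfold Q2, Q1. rewrite !form_act_comp. rewrite Ha. f_equal; ring. }
    rewrite Edec.
    apply rel_trans with (wQ Q1).
    { unfold Q1. rewrite wQ_transl by auto. apply rel_transl, wQ_not_int; auto. }
    apply rel_trans with (wQ Q2).
    { unfold Q2. rewrite wQ_S by auto. apply inv_rel.
      - intro E. apply (wQ_not_int Q1 HQ1 0). exact E.
      - apply NI_wQ; auto.
      - rewrite <- wQ_S by auto. apply NI_wQ; auto. }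
    apply (IH (Z.abs_nat r)); auto.
    + lia.
    + rewrite Ha in Hdet. lia.
Qed.

End C_F4.
Import C_F4.

Module C_S1.
Import ListNotations.
Import Defs.
Import ListNotations.

Definition evp (m : nat) := if Nat.odd m then 2 * m else m.
Definition cvec (d : nat -> Z) (k m : nat) := map (fun j => d (2 * k + j)%nat) (seq 0 (evp m)).

Lemma evp_even : forall m, exists h, evp m = 2 * h.
Proof.
  intros m. unfold evp. destruct (Nat.odd m) eqn:E; [eauto|].
  assert (Nat.even m = true) by (rewrite <- Nat.negb_odd, E; reflexivity).
  apply Nat.even_spec in H as [h Hh]. eauto.
Qed.

Lemma evp_ge : forall m, m <= evp m.
Proof. intros m. unfold evp. destruct (Nat.odd m); lia. Qed.

Lemma per_mult : forall d N p, periodic_from d N p -> forall q n, N <= n -> d (n + q * p)%nat = d n.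
Proof.
  intros d N p [Hp H] q n Hn. induction q as [|q IH]; [rewrite Nat.add_0_r; reflexivity|].
  replace (n + S q * p)%nat with ((n + q * p) + p)%nat by lia. rewrite H by lia. exact IH.
Qed.

Lemma per_evp : forall d N m, periodic_from d N m -> forall n, N <= n -> d (n + evp m)%nat = d n.
Proof.
  intros d N m H n Hn. unfold evp. destruct (Nat.odd m).
  - replace (2 * m)%nat with (2 * m)%nat by lia. apply (per_mult d N m H 2 n Hn).
  - apply (per_mult d N m H 1 n) in Hn. rewrite Nat.mul_1_l in Hn. exact Hn.
Qed.

Lemma per_later : forall d N N' p, periodic_from d N p -> N <= N' -> periodic_from d N' p.
Proof. intros d N N' p [H1 H2] H. split; auto. intros n Hn. apply H2. lia. Qed.

Lemma min_period_exists : forall d, (exists N p, periodic_from d N p) -> exists m, min_period d m.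
Proof.
  intros d (N & p & Hp).
  assert (forall p, (exists N, periodic_from d N p) -> exists m, min_period d m).
  { intro p0. induction p0 as [p0 IH] using lt_wf_ind. intros HP.
    destruct (classic (exists q, q < p0 /\ exists N, periodic_from d N q)) as [(q & Hq & HQ)|Hn].
    - apply (IH q Hq HQ).
    - exists p0. split; auto. intros q HQ. destruct (Nat.lt_ge_cases q p0); auto.
      exfalso. apply Hn. eauto. }
  eauto.
Qed.

Lemma min_unique : forall d m m', min_period d m -> min_period d m' -> m = m'.
Proof. intros d m m' [H1 H2] [H3 H4]. specialize (H2 m' H3). specialize (H4 m H1). lia. Qed.

Lemma map_seq_shift : forall {A} (f : nat -> A) s a n,
  map f (seq (s + a) n) = map (fun t => f (s + t)%nat) (seq a n).
Proof.
  intros A f s a n. revert a. induction n as [|n IH]; intros a; [reflexivity|].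
  simpl. f_equal. rewrite <- IH. rewrite Nat.add_succ_r. reflexivity.
Qed.

Lemma per_transfer : forall (d e : nat -> Z) i j N p, (forall n, d (i + n)%nat = e (j + n)%nat) ->
  periodic_from d N p -> periodic_from e (N + j) p.
Proof.
  intros d e i j N p Hs [Hp H]. split; auto. intros n Hn.
  replace (n + p)%nat with (j + (n - j + p))%nat by lia.
  rewrite <- Hs. replace n with (j + (n - j))%nat at 2 by lia. rewrite <- Hs.
  replace (i + (n - j + p))%nat with ((i + (n - j)) + p)%nat by lia. apply H. lia.
Qed.

Lemma min_transfer : forall (d e : nat -> Z) i j m, (forall n, d (i + n)%nat = e (j + n)%nat) ->
  min_period d m -> min_period e m.
Proof.
  intros d e i j m Hs [(N & HN) H]. split.
  - exists (N + j)%nat. eapply per_transfer; eauto.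
  - intros q (N' & HN'). apply H. exists (N' + i)%nat. eapply per_transfer; [|exact HN'].
    intros n. symmetry. apply Hs.
Qed.

Lemma seq_rot : forall (d e : nat -> Z) k k' m m' i j,
  min_period d m -> periodic_from d (2 * k) m ->
  min_period e m' -> periodic_from e (2 * k') m' ->
  Nat.even i = Nat.even j -> (forall n, d (i + n)%nat = e (j + n)%nat) ->
  exists u v, Nat.even (length u) = true /\ Nat.even (length v) = true /\
    cvec d k m = u ++ v /\ cvec e k' m' = v ++ u.
Proof.
  intros d e k k' m m' i j Hm Pd Hm' Pe Hij Hs.
  assert (m' = m) by (eapply min_unique; [exact Hm'|eapply min_transfer; eauto]). subst m'.
  set (M := evp m).
  destruct (evp_even m) as [h Hh]. fold M in Hh.
  assert (Hm1 : 1 <= m) by (destruct Pd; lia).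
  assert (HM1 : 1 <= M) by (pose proof (evp_ge m); unfold M; lia).
  set (f := fun t => d (2 * k + t)%nat). set (g := fun t => e (2 * k' + t)%nat).
  assert (fper : forall q t, f (t + q * M)%nat = f t).
  { intros q t. unfold f. induction q as [|q IH]; [rewrite Nat.add_0_r; reflexivity|].
    replace (2 * k + (t + S q * M))%nat with ((2 * k + (t + q * M)) + evp m)%nat by (unfold M; lia).
    rewrite (per_evp d (2 * k) m Pd) by lia. exact IH. }
  assert (gper : forall q t, g (t + q * M)%nat = g t).
  { intros q t. unfold g. induction q as [|q IH]; [rewrite Nat.add_0_r; reflexivity|].
    replace (2 * k' + (t + S q * M))%nat with ((2 * k' + (t + q * M)) + evp m)%nat by (unfold M; lia).
    rewrite (per_evp e (2 * k') m Pe) by lia. exact IH. }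
  set (L := (j + 2 * k)%nat).
  assert (HLM : L <= L * M) by nia.
  set (R0 := (i + 2 * k' + L * M - j - 2 * k)%nat).
  assert (Hg : forall t, g t = f (R0 + t)%nat).
  { intros t. rewrite <- (gper L t). unfold g, f.
    replace (2 * k' + (t + L * M))%nat with (j + (2 * k' + t + L * M - j))%nat by lia.
    rewrite <- Hs. f_equal. unfold R0. lia. }
  set (r := (R0 mod M)%nat).
  assert (Hr : r < M) by (apply Nat.mod_upper_bound; lia).
  assert (Hg2 : forall t, g t = f (r + t)%nat).
  { intros t. rewrite Hg. rewrite <- (fper (R0 / M) (r + t)). f_equal.
    pose proof (Nat.div_mod_eq R0 M). unfold r. lia. }
  assert (Er : exists w, r = 2 * w).
  { assert (HR0 : exists a, R0 = 2 * a).
    { assert (Nat.even (i + j) = true) by (rewrite Nat.even_add, Hij; destruct (Nat.even j); reflexivity).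
      apply Nat.even_spec in H as [w Hw].
      exists (w + k' + L * h - j - k)%nat. unfold R0.
      assert (L * M = 2 * (L * h))%nat by (rewrite Hh; ring). lia. }
    destruct HR0 as [a Ha]. unfold r. rewrite Ha, Hh.
    rewrite Nat.Div0.mul_mod_distr_l. eauto. }
  destruct Er as [w Hw].
  exists (map f (seq 0 r)), (map f (seq r (M - r))).
  split; [rewrite length_map, length_seq, Hw; apply Nat.even_spec; exists w; lia|].
  split; [rewrite length_map, length_seq, Hh, Hw; apply Nat.even_spec; exists (h - w)%nat; lia|].
  split.
  - unfold cvec. fold M. fold f. replace M with (r + (M - r))%nat at 1 by lia.
    rewrite seq_app, map_app. reflexivity.
  - unfold cvec. fold M. change (map (fun j0 => e (2 * k' + j0)%nat) (seq 0 M)) with (map g (seq 0 M)).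
    rewrite (map_ext g (fun t => f (r + t)%nat)) by exact Hg2.
    rewrite <- map_seq_shift, Nat.add_0_r.
    assert (Es : seq r M = seq r (M - r) ++ seq (r + (M - r)) r) by (rewrite <- seq_app; f_equal; lia).
    rewrite Es, map_app. f_equal.
    replace (r + (M - r))%nat with (M + 0)%nat by lia. rewrite map_seq_shift.
    apply map_ext. intros t. rewrite <- (fper 1 t). f_equal. lia.
Qed.

End C_S1.
Import C_S1.

Module C_S2.
Import ListNotations.
Import Defs.
Import ListNotations.

Lemma no_smaller_period : forall (d : nat -> Z) k m P0, min_period d m -> periodic_from d (2 * k) m ->
  Nat.even P0 = true -> 0 < P0 < evp m -> (forall t, d (2 * k + t + P0)%nat = d (2 * k + t)%nat) -> False.
Proof.
  intros d k m P0 [_ Hmin] Pm HP0 HP HT.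
  assert (PP : periodic_from d (2 * k) P0).
  { split; [lia|]. intros n Hn. replace n with (2 * k + (n - 2 * k))%nat by lia. apply HT. }
  assert (H1 := Hmin P0 (ex_intro (fun N => periodic_from d N P0) _ PP)).
  unfold evp in HP. destruct (Nat.odd m) eqn:Em; [|lia].
  assert (P0 <> m) by (intro; subst; rewrite <- Nat.negb_odd, Em in HP0; discriminate).
  assert (PQ : periodic_from d (2 * k) (P0 - m)).
  { split; [lia|]. intros n Hn. destruct Pm as [_ Pm].
    rewrite <- (Pm (n + (P0 - m))%nat) by lia.
    replace (n + (P0 - m) + m)%nat with (n + P0)%nat by lia.
    destruct PP as [_ PP]. apply PP. auto. }
  assert (H2 := Hmin _ (ex_intro (fun N => periodic_from d N (P0 - m)) _ PQ)). lia.
Qed.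

Lemma nth_map_seq : forall {A} (g : nat -> A) n i x0, i < n -> nth i (map g (seq 0 n)) x0 = g i.
Proof.
  intros A g n i x0 H. rewrite (nth_indep _ x0 (g 0)) by (rewrite length_map, length_seq; auto).
  rewrite map_nth, seq_nth by auto. reflexivity.
Qed.

Lemma comm_period : forall {A} (g : nat -> A) M c1 c2, 0 < M -> (forall t, g (t + M)%nat = g t) ->
  map g (seq 0 M) = c1 ++ c2 -> map g (seq 0 M) = c2 ++ c1 -> forall t, g (t + length c1)%nat = g t.
Proof.
  intros A g M c1 c2 HM Hp E1 E2.
  assert (HL : length c1 + length c2 = M).
  { rewrite <- length_app, <- E1, length_map, length_seq. reflexivity. }
  assert (Hq : forall q t, g (t + q * M)%nat = g t).
  { induction q as [|q IH]; intros t; [rewrite Nat.add_0_r; reflexivity|].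
    replace (t + S q * M)%nat with ((t + q * M) + M)%nat by lia. rewrite Hp. apply IH. }
  assert (Hsmall : forall t, t < M -> g (t + length c1)%nat = g t).
  { intros t Ht. set (x0 := g 0).
    destruct (Nat.lt_ge_cases (t + length c1) M) as [H|H].
    - rewrite <- (nth_map_seq g M (t + length c1) x0 H), <- (nth_map_seq g M t x0 Ht).
      rewrite E1 at 1. rewrite E2.
      rewrite app_nth2 by lia. rewrite app_nth1 by lia. f_equal. lia.
    - rewrite <- Hp. replace (t + length c1 + M)%nat with ((t + length c1 - M) + 1 * M + M)%nat by lia.
      rewrite Hp, Hq.
      rewrite <- (nth_map_seq g M (t + length c1 - M) x0) by lia. rewrite <- (nth_map_seq g M t x0 Ht).
      rewrite E1 at 1. rewrite E2.
      rewrite app_nth1 by lia. rewrite app_nth2 by lia. f_equal. lia. }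
  intros t. pose proof (Nat.div_mod_eq t M).
  assert (t mod M < M) by (apply Nat.mod_upper_bound; lia).
  replace t with (t mod M + (t / M) * M)%nat by lia.
  replace (t mod M + t / M * M + length c1)%nat with ((t mod M + length c1) + (t / M) * M)%nat by lia.
  rewrite !Hq. apply Hsmall. auto.
Qed.

Lemma lpow_map_seq : forall {A} (d : nat -> A) P q, (forall n, d (n + P)%nat = d n) ->
  map d (seq 0 (q * P)) = lpow (map d (seq 0 P)) q.
Proof.
  intros A d P q Hp. induction q as [|q IH]; [reflexivity|].
  replace (S q * P)%nat with (P + q * P)%nat by lia. rewrite seq_app, map_app.
  unfold lpow. simpl. f_equal. fold (lpow (map d (seq 0 P)) q). rewrite <- IH.
  rewrite <- (Nat.add_0_r P) at 1. rewrite map_seq_shift.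
  apply map_ext. intros t. rewrite Nat.add_comm. apply Hp.
Qed.

Lemma part5_struct : forall (d : nat -> Z) M m, (forall n, d (n + M)%nat = d n) -> 1 <= M ->
  Nat.even M = true -> min_period d m ->
  periodic_from d 0 m /\ exists q, 1 <= q /\ M = (q * evp m)%nat /\
    map d (seq 0 M) = lpow (map d (seq 0 (evp m))) q.
Proof.
  intros d M m HM HM1 HMe [(N & PN) Hmin].
  assert (Hq : forall q n, d (n + q * M)%nat = d n).
  { induction q as [|q IH]; intros n; [rewrite Nat.add_0_r; reflexivity|].
    replace (n + S q * M)%nat with ((n + q * M) + M)%nat by lia. rewrite HM. apply IH. }
  assert (P0 : periodic_from d 0 m).
  { destruct PN as [Hm PN]. split; auto. intros n _.
    rewrite <- (Hq N (n + m)%nat), <- (Hq N n).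
    replace (n + m + N * M)%nat with ((n + N * M) + m)%nat by lia. apply PN. nia. }
  split; auto.
  assert (Hm1 : 1 <= m) by (destruct P0; lia).
  assert (Hdiv : (M mod m = 0)%nat).
  { destruct (Nat.eq_dec (M mod m) 0) as [E|E]; auto. exfalso.
    assert (Pr : periodic_from d 0 (M mod m)).
    { split; [lia|]. intros n _. pose proof (Nat.div_mod_eq M m).
      rewrite <- (HM n). replace (n + M)%nat with ((n + M mod m) + (M / m) * m)%nat by lia.
      symmetry. apply (per_mult d 0 m P0). lia. }
    assert (H := Hmin _ (ex_intro (fun N => periodic_from d N (M mod m)) _ Pr)). assert (M mod m < m) by (apply Nat.mod_upper_bound; lia). lia. }
  pose proof (Nat.div_mod_eq M m) as Edm. rewrite Hdiv, Nat.add_0_r in Edm.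
  set (q0 := (M / m)%nat) in *.
  assert (Pe : forall n, d (n + evp m)%nat = d n) by (intros n; apply (per_evp d 0 m P0); lia).
  assert (HQ : exists q, 1 <= q /\ M = (q * evp m)%nat).
  { unfold evp. destruct (Nat.odd m) eqn:Em.
    - assert (Nat.even q0 = true).
      { rewrite Edm, Nat.even_mul in HMe. rewrite <- Nat.negb_odd, Em in HMe. simpl in HMe.
        destruct (Nat.even q0); [reflexivity|discriminate]. }
      apply Nat.even_spec in H as [q1 Hq1]. exists q1. split; [nia|]. lia.
    - exists q0. split; [nia|]. lia. }
  destruct HQ as (q & Hq1 & Hq2). exists q. repeat split; auto.
  rewrite Hq2. apply lpow_map_seq. exact Pe.
Qed.

End C_S2.
Import C_S2.

Module C_M1.
Import ListNotations.
Import Defs.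
Import ListNotations.
Import Defs.

Lemma cyc_app : forall X Y : list LR, cyc_equiv (X ++ Y) (Y ++ X).
Proof.
  intros X Y. exists (length X). rewrite skipn_app, firstn_app.
  rewrite skipn_all, firstn_all, Nat.sub_diag. simpl. rewrite app_nil_r. reflexivity.
Qed.

Lemma cev_cvec : forall x k c, cf_even_period x k c ->
  exists m, min_period (cf_digit x) m /\ periodic_from (cf_digit x) (2 * k) m /\ c = cvec (cf_digit x) k m.
Proof. intros x k c (m & H1 & H2 & H3). exists m. split; [exact H1|split; [exact H2|exact H3]]. Qed.

Lemma pos_c : forall (d : nat -> Z) k m, periodic_from d (2 * k) m -> (forall n, (1 <= d (S n))%Z) ->
  forall t, (1 <= d (2 * k + t)%nat)%Z.
Proof.
  intros d k m [Hm P] Hd t. destruct (2 * k + t)%nat eqn:E; [|apply Hd].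
  assert (k = 0 /\ t = 0)%nat as [-> ->] by lia.
  rewrite <- (P 0%nat) by lia. destruct m; [lia|]. apply Hd.
Qed.

Lemma cvec_len : forall d k m, length (cvec d k m) = evp m.
Proof. intros. unfold cvec. rewrite length_map, length_seq. reflexivity. Qed.

Lemma evp_even_b : forall m, Nat.even (evp m) = true.
Proof. intros m. destruct (evp_even m) as [h ->]. apply Nat.even_spec. exists h. reflexivity. Qed.

Lemma repeat_S_r : forall {A} (a : A) n, repeat a (S n) = repeat a n ++ [a].
Proof. intros A a n. induction n as [|n IH]; [reflexivity|]. simpl in *. rewrite IH. reflexivity. Qed.

Lemma wo_start : forall c, posl c -> c <> [] -> exists w0, wo false c = L_ :: w0.
Proof.
  intros [|x r] P H; [congruence|]. apply Forall_cons_iff in P as [Px _].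
  destruct x; [lia|]. simpl. eauto.
Qed.

Lemma wo_end : forall c, posl c -> c <> [] -> Nat.even (length c) = true -> exists w1, wo false c = w1 ++ [R_].
Proof.
  intros c P H E. destruct (exists_last H) as (c0 & x & ->).
  rewrite wo_app. rewrite length_app in E. simpl in E.
  replace (Nat.even (length c0)) with false.
  2: { rewrite Nat.add_1_r, Nat.even_succ, <- Nat.negb_even in E. destruct (Nat.even (length c0)); auto. }
  apply Forall_app in P as [_ P]. apply Forall_cons_iff in P as [Px _].
  destruct x; [lia|]. exists (wo false c0 ++ repeat R_ x). rewrite <- app_assoc. f_equal.
  change (wo (negb false) [S x]) with (repeat R_ (S x) ++ []). rewrite app_nil_r, repeat_S_r. reflexivity.
Qed.

Lemma wo_nil : forall c, posl c -> wo false c = [] -> c = [].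
Proof.
  intros [|x r] P H; auto. apply Forall_cons_iff in P as [Px _]. destruct x; [lia|]. discriminate.
Qed.

Section Digits.
Variable Q : form.
Hypothesis HQ : in_Qplus Q.
Local Notation d := (cf_digit (wQ Q)).

Lemma d_pos : forall n, (1 <= d (S n))%Z.
Proof. intros n. apply digit_ge1, NI_wQ; auto. Qed.

Lemma part1 : exists w, W_rel Q w.
Proof.
  destruct (min_period_exists d (lagrange Q HQ)) as [m Hm].
  destruct Hm as [(N & PN) Hmin] eqn:Hm'.
  exists (word_of (map Z.to_nat (cvec d N m))). exists N, (cvec d N m). split; [|reflexivity].
  exists m. split; [exact Hm|]. split; [apply (per_later d N); auto; lia|reflexivity].
Qed.

Lemma cn_props : forall k m, periodic_from d (2 * k) m ->
  posl (map Z.to_nat (cvec d k m)) /\ Nat.even (length (map Z.to_nat (cvec d k m))) = true /\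
  2 <= length (map Z.to_nat (cvec d k m)).
Proof.
  intros k m P. split; [|split].
  - unfold posl, cvec. rewrite map_map. apply Forall_forall. intros x Hx.
    apply in_map_iff in Hx as (t & <- & _). pose proof (pos_c d k m P d_pos t). lia.
  - rewrite length_map, cvec_len. apply evp_even_b.
  - rewrite length_map, cvec_len. destruct P as [Hm _]. destruct (evp_even m) as [h Hh].
    pose proof (evp_ge m). lia.
Qed.

Lemma part4 : forall w, W_rel Q w -> ~ cyc_equiv w [L_] /\ ~ cyc_equiv w [R_].
Proof.
  intros w (k & c & Hc & ->). destruct (cev_cvec _ _ _ Hc) as (m & Hm & Pm & ->).
  destruct (cn_props k m Pm) as (P & E & L2).
  assert (HL : 2 <= length (word_of (map Z.to_nat (cvec d k m)))).
  { rewrite word_of_wo. destruct (map Z.to_nat (cvec d k m)) as [|x [|y r]]; simpl in L2; try lia.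
    apply Forall_cons_iff in P as [Px P]. apply Forall_cons_iff in P as [Py _].
    simpl. rewrite !length_app, !repeat_length. lia. }
  split; intros (i & Hi); apply (f_equal (@length LR)) in Hi; rewrite length_app, length_skipn, length_firstn in Hi;
    simpl in Hi; lia.
Qed.

Lemma part3 : forall w, W_rel Q w -> primitive_word w.
Proof.
  intros w (k & c & Hc & ->). destruct (cev_cvec _ _ _ Hc) as (m & Hm & Pm & ->).
  destruct (cn_props k m Pm) as (P & E & L2).
  rewrite word_of_wo.
  set (cn := map Z.to_nat (cvec d k m)) in *.
  assert (Hne : cn <> []) by (intro H; rewrite H in L2; simpl in L2; lia).
  destruct (wo_start cn P Hne) as [w0 Hw0].
  destruct (wo_end cn P Hne E) as [w1 Hw1].
  split; [rewrite Hw0; discriminate|].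
  intros U kk Hkk Hw. change (concat (repeat U kk)) with (lpow U kk) in Hw.
  assert (HU : U <> []).
  { intro HU. subst U. assert (lpow (@nil LR) kk = []) by (unfold lpow; clear; induction kk; simpl; auto).
    rewrite H in Hw. rewrite Hw in Hw0. discriminate. }
  destruct kk as [|kk]; [lia|].
  set (V := lpow U kk).
  assert (E1 : wo false cn = U ++ V) by (rewrite Hw; reflexivity).
  assert (E2 : wo false cn = V ++ U) by (rewrite Hw, pow_S_r; reflexivity).
  assert (UL : exists U', U = L_ :: U').
  { destruct U as [|h U']; [congruence|]. rewrite E1 in Hw0. simpl in Hw0. injection Hw0; intros; subst. eauto. }
  assert (UR : exists U0, U = U0 ++ [R_]).
  { destruct (exists_last HU) as (U0 & a & EU). rewrite E2, EU, app_assoc in Hw1.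
    apply app_inj_tail in Hw1 as [_ ->]. eauto. }
  assert (HV : V <> []).
  { unfold V. destruct kk as [|kk]; [lia|]. simpl. intro H. apply app_eq_nil in H as [H _]. auto. }
  assert (VL : exists V0, V = L_ :: V0).
  { unfold V in *. destruct kk as [|kk]; [lia|]. simpl. destruct UL as [U' ->]. unfold lpow; simpl. eauto. }
  assert (VR : exists V1, V = V1 ++ [R_]).
  { unfold V in *. destruct kk as [|kk]; [lia|]. rewrite pow_S_r. destruct UR as [U0 ->].
    exists (lpow (U0 ++ [R_]) kk ++ U0). rewrite app_assoc. reflexivity. }
  destruct (split_lem (length cn) cn (le_n _) P E U V E1 (or_intror UR) (or_intror VL))
    as (c1 & c2 & Ec & Ev1 & W1 & W2).
  destruct (split_lem (length cn) cn (le_n _) P E V U E2 (or_intror VR) (or_intror UL))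
    as (c3 & c4 & Ec' & Ev3 & W3 & W4).
  assert (Pc := P). rewrite Ec in Pc. apply Forall_app in Pc as [P1 P2].
  assert (Pc' := P). rewrite Ec' in Pc'. apply Forall_app in Pc' as [P3 P4].
  assert (c4 = c1) by (apply (wo_inj c4 c1 false P4 P1); congruence).
  assert (c3 = c2) by (apply (wo_inj c3 c2 false P3 P2); congruence). subst c3 c4.
  set (g := fun t => Z.to_nat (d (2 * k + t)%nat)).
  assert (Hcn : cn = map g (seq 0 (evp m))) by (unfold cn, cvec; rewrite map_map; reflexivity).
  set (M := evp m) in *.
  assert (HM : 0 < M) by (unfold M; pose proof (evp_ge m); destruct Pm; lia).
  assert (gper : forall t, g (t + M)%nat = g t).
  { intros t. unfold g. f_equal. replace (2 * k + (t + M))%nat with ((2 * k + t) + evp m)%nat by (unfold M; lia).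
    apply (per_evp d (2 * k) m Pm). lia. }
  assert (CP := comm_period g M c1 c2 HM gper (eq_trans (eq_sym Hcn) Ec) (eq_trans (eq_sym Hcn) Ec')).
  assert (Hc1 : c1 <> []) by (intro; subst c1; simpl in W1; congruence).
  assert (Hc2 : c2 <> []) by (intro; subst c2; simpl in W2; congruence).
  assert (LM : length c1 + length c2 = M).
  { rewrite <- length_app, <- Ec. unfold cn. rewrite length_map, cvec_len. reflexivity. }
  apply (no_smaller_period d k m (length c1) Hm Pm Ev1).
  - destruct c1; [congruence|]. destruct c2; [congruence|]. simpl in LM. simpl. lia.
  - intros t. specialize (CP t). unfold g in CP.
    pose proof (pos_c d k m Pm d_pos t). pose proof (pos_c d k m Pm d_pos (t + length c1)).
    rewrite Nat.add_assoc in *. apply Z2Nat.inj in CP; lia.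
Qed.

End Digits.

Lemma part2 : forall (Q Q' : form) (w w' : list LR),
      in_Qplus Q -> SL2_equiv Q Q' -> W_rel Q w -> W_rel Q' w' -> cyc_equiv w w'.
Proof.
  intros Q Q' w w' HQ (a & b & c & dd & Hdet & ->) (k & cc & Hc & ->) (k' & cc' & Hc' & ->).
  destruct (cev_cvec _ _ _ Hc) as (m & Hm & Pm & ->).
  destruct (cev_cvec _ _ _ Hc') as (m' & Hm' & Pm' & ->).
  destruct (sl2_rel (Z.abs_nat c) Q a b c dd eq_refl HQ Hdet) as (i & j & Hij & E).
  destruct (seq_rot (cf_digit (wQ Q)) (cf_digit (wQ (form_act Q a b c dd))) k k' m m' i j Hm Pm Hm' Pm' Hij)
    as (u & v & Eu & Ev & -> & ->).
  { intros n. unfold cf_digit. rewrite !cf_rem_add, E. reflexivity. }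
  rewrite !map_app, !word_of_wo.
  rewrite !wo_app_even by (rewrite length_map; auto).
  apply cyc_app.
Qed.

End C_M1.
Import C_M1.

Module C_M2.
Import ListNotations.
Import Defs.
Import ListNotations.
Import Defs.

Lemma RL_or_sorted : forall u : list LR, (exists A B, u = A ++ R_ :: L_ :: B) \/
  exists a b, u = repeat L_ a ++ repeat R_ b.
Proof.
  induction u as [|x u IH].
  - right. exists 0%nat, 0%nat. reflexivity.
  - destruct IH as [(A & B & ->)|(a & b & ->)].
    + left. exists (x :: A), B. reflexivity.
    + destruct x.
      * right. exists (S a), b. reflexivity.
      * destruct a as [|a].
        -- right. exists 0%nat, (S b). reflexivity.
        -- left. exists [], (repeat L_ a ++ repeat R_ b). reflexivity.
Qed.

Lemma repeat_lpow : forall {A} (x : A) n, repeat x n = lpow [x] n.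
Proof. intros A x n. induction n as [|n IH]; [reflexivity|]. unfold lpow in *. simpl. rewrite IH. reflexivity. Qed.

Lemma map_lpow : forall {A B} (f : A -> B) X q, map f (lpow X q) = lpow (map f X) q.
Proof.
  intros A B f X q. induction q as [|q IH]; [reflexivity|]. unfold lpow in *. simpl.
  rewrite map_app, IH. reflexivity.
Qed.

Lemma list_nth_seq : forall (c : list Z), map (fun j => nth j c 0%Z) (seq 0 (length c)) = c.
Proof.
  intros c. apply nth_ext with (d := 0%Z) (d' := 0%Z).
  - rewrite length_map, length_seq. reflexivity.
  - intros n Hn. rewrite length_map, length_seq in Hn. rewrite nth_map_seq by auto. reflexivity.
Qed.

Lemma single_prim : forall (x : LR) n, primitive_word (repeat x n) -> n = 1%nat.
Proof.
  intros x n [H1 H2]. destruct n as [|[|n]]; auto.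
  - simpl in H1. congruence.
  - exfalso. apply (H2 [x] (S (S n))); [lia|]. apply repeat_lpow.
Qed.

Lemma cyc_refl : forall u : list LR, cyc_equiv u u.
Proof. intros u. exists 0%nat. simpl. rewrite app_nil_r. reflexivity. Qed.

Lemma rotate_LR : forall u, primitive_word u -> ~ cyc_equiv u [L_] -> ~ cyc_equiv u [R_] ->
  exists A B, u = A ++ B /\ (exists v0, B ++ A = L_ :: v0) /\ (exists v1, B ++ A = v1 ++ [R_]).
Proof.
  intros u Hp HL HR. destruct (RL_or_sorted u) as [(A & B & ->)|(a & b & ->)].
  - exists (A ++ [R_]), (L_ :: B). split; [rewrite <- app_assoc; reflexivity|]. split.
    + eexists. reflexivity.
    + exists (L_ :: B ++ A). simpl. rewrite <- app_assoc. reflexivity.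
  - destruct a as [|a].
    + exfalso. simpl in *. assert (b = 1%nat) by (eapply single_prim; eauto). subst b.
      apply HR. apply cyc_refl.
    + destruct b as [|b].
      * exfalso. rewrite app_nil_r in *. assert (S a = 1%nat) by (eapply single_prim; eauto).
        rewrite H in HL. apply HL. apply cyc_refl.
      * exists [], (repeat L_ (S a) ++ repeat R_ (S b)). split; [reflexivity|]. rewrite app_nil_r. split.
        -- eexists. reflexivity.
        -- rewrite (repeat_S_r R_ b), app_assoc. eexists. reflexivity.
Qed.

Fixpoint mat (l : list Z) : Z * Z * Z * Z :=
  match l with
  | [] => (1, 0, 0, 1)%Z
  | a :: r => let '(p, p', q, q') := mat r in (a * p + q, a * p' + q', p, p')%Z
  end.

Local Open Scope R_scope.

Lemma mat_phi : forall l p p' q q', mat l = (p, p', q, q') -> posz l ->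
  (0 <= p /\ 0 <= p' /\ 0 <= q /\ 0 <= q')%Z /\
  forall t, 0 < t -> 0 < IZR p * t + IZR p' /\ 0 < IZR q * t + IZR q' /\
     phi l t = (IZR p * t + IZR p') / (IZR q * t + IZR q').
Proof.
  induction l as [|a r IH]; intros p p' q q' E P.
  - simpl in E. injection E; intros; subst. split; [lia|]. intros t Ht. simpl. split; [lra|]. split; [lra|]. field.
  - simpl in E. destruct (mat r) as [[[p0 p0'] q0] q0'] eqn:Er.
    injection E as E1 E2 E3 E4. subst p p' q q'. apply Forall_cons_iff in P as [Pa Pr].
    destruct (IH p0 p0' q0 q0' eq_refl Pr) as [B H]. split; [nia|].
    intros t Ht. destruct (H t Ht) as (H1 & H2 & H3).
    apply IZR_le in Pa.
    assert (IZR p0 * t >= 0) by (apply Rle_ge, Rmult_le_pos; [apply IZR_le; lia|lra]).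
    rewrite !plus_IZR, !mult_IZR. split; [nra|]. split; [exact H1|].
    simpl. rewrite H3. field. lra.
Qed.

Lemma mat_ne : forall l p p' q q', mat l = (p, p', q, q') -> posz l -> l <> [] ->
  (1 <= p /\ 1 <= p' /\ 1 <= q)%Z.
Proof.
  induction l as [|a r IH]; intros p p' q q' E P H; [congruence|].
  simpl in E. destruct (mat r) as [[[p0 p0'] q0] q0'] eqn:Er.
  injection E as E1 E2 E3 E4. subst p p' q q'. apply Forall_cons_iff in P as [Pa Pr].
  destruct (mat_phi r p0 p0' q0 q0' Er Pr) as [B _].
  destruct r as [|b r'].
  - simpl in Er. injection Er; intros; subst. lia.
  - destruct (IH p0 p0' q0 q0' eq_refl Pr ltac:(discriminate)) as (? & ? & ?). nia.
Qed.

End C_M2.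
Import C_M2.

Module C_M3.
Import ListNotations.
Import Defs.
Import ListNotations.
Import Defs.
Local Open Scope R_scope.

Lemma construct : forall c : list Z, posz c -> c <> [] ->
  exists Q, in_Qplus Q /\ (forall n, cf_digit (wQ Q) (n + length c)%nat = cf_digit (wQ Q) n) /\
    (forall j, (j < length c)%nat -> cf_digit (wQ Q) j = nth j c 0%Z).
Proof.
  intros c Pc Hc.
  destruct (mat c) as [[[p p'] q] q'] eqn:Em.
  destruct (mat_phi c p p' q q' Em Pc) as [Bnd Hphi].
  destruct (mat_ne c p p' q q' Em Pc Hc) as (Hp & Hp' & Hq).
  set (Qf := mkForm q (q' - p) (- p')).
  assert (HD : disc Qf = ((q' - p) * (q' - p) + 4 * q * p')%Z) by (unfold disc, Qf; cbn [fa fb fc]; ring).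
  assert (HD0 : (0 < disc Qf)%Z).
  { rewrite HD. assert (0 <= (q' - p) * (q' - p))%Z by apply Z.square_nonneg.
    assert (1 <= q * p')%Z by nia. lia. }
  set (s := sqrt (IZR (disc Qf))).
  assert (Hs2 : s * s = IZR (disc Qf)) by (apply sqrt_sqrt; apply IZR_le; lia).
  assert (Hs0 : 0 <= s) by apply sqrt_pos.
  set (x := wQ Qf).
  assert (Ex : x = (- IZR (q' - p) + s) / (2 * IZR q)) by reflexivity.
  assert (Qr : 0 < IZR q) by (apply IZR_lt; lia).
  assert (Root : IZR q * x * x + IZR (q' - p) * x - IZR p' = 0).
  { rewrite Ex. field_simplify_eq; [|lra].
    rewrite HD, plus_IZR, !mult_IZR in Hs2.
    replace (s ^ 2) with (s * s) by ring. rewrite Hs2. ring. }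
  assert (Xpos : 0 < x).
  { rewrite Ex. apply Rdiv_lt_0_compat; [|lra].
    assert (IZR (q' - p) < s).
    { rewrite HD, plus_IZR, !mult_IZR in Hs2.
      assert (0 < IZR q * IZR p') by (apply Rmult_lt_0_compat; [lra|apply IZR_lt; lia]).
      destruct (Rlt_or_le (IZR (q' - p)) 0); [lra|]. nra. }
    lra. }
  assert (Fix : phi c x = x).
  { destruct (Hphi x Xpos) as (H1 & H2 & ->). field_simplify_eq; [|lra].
    rewrite minus_IZR in Root. nra. }
  assert (X1 : 1 < x).
  { rewrite <- Fix. destruct c as [|a r]; [congruence|]. apply phi_cons_gt1; auto. }
  destruct (phi_cf c x X1 Pc) as [Hb Hl]. rewrite Fix in Hb, Hl.
  set (M := length c) in *.
  assert (HM : (0 < M)%nat) by (unfold M; destruct c; [congruence|simpl; lia]).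
  assert (Per : forall n, cf_rem x (n + M) = cf_rem x n).
  { intros n. rewrite Nat.add_comm, cf_rem_add, Hl. reflexivity. }
  assert (Perq : forall k n, cf_rem x (n + k * M) = cf_rem x n).
  { induction k as [|k IH]; intros n; [rewrite Nat.add_0_r; reflexivity|].
    replace (n + S k * M)%nat with ((n + k * M) + M)%nat by lia. rewrite Per. apply IH. }
  assert (Red : forall n, cf_rem x n = cf_rem x (n mod M)).
  { intros n. pose proof (Nat.div_mod_eq n M). rewrite <- (Perq (n / M)%nat (n mod M)).
    f_equal. lia. }
  assert (NX : NI x).
  { intros n z E. rewrite Red in E. assert (Hn : (n mod M < M)%nat) by (apply Nat.mod_upper_bound; lia).
    destruct (Hb _ Hn) as [B1 B2]. rewrite E in B1, B2.
    rewrite <- plus_IZR in B2. apply lt_IZR in B1. apply lt_IZR in B2. lia. }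
  exists Qf. split; [|split].
  - split; [exact HD0|]. intros (z & Hz).
    assert (Es : s = IZR (Z.abs z)).
    { unfold s. rewrite <- Hz, mult_IZR. rewrite abs_IZR. apply sqrt_Rsqr_abs. }
    apply (rational_not_NI x NX (- (q' - p) + Z.abs z) (2 * q)); [lia|].
    rewrite Ex, Es, plus_IZR, opp_IZR, mult_IZR. reflexivity.
  - intros n. unfold cf_digit. fold x. rewrite Per. reflexivity.
  - intros j Hj. unfold cf_digit. fold x. destruct (Hb j Hj). apply Int_part_eq. lra.
Qed.

Lemma part5 : forall u : list LR, primitive_word u -> ~ cyc_equiv u [L_] -> ~ cyc_equiv u [R_] ->
      exists (Q : form) (w : list LR), in_Qplus Q /\ W_rel Q w /\ cyc_equiv w u.
Proof.
  intros u Hu HL HR.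
  destruct (rotate_LR u Hu HL HR) as (A & B & -> & (v0 & Hv0) & (v1 & Hv1)).
  set (v := B ++ A) in *.
  assert (Hpv : forall U k, (2 <= k)%nat -> v <> lpow U k).
  { intros U k Hk E. destruct (rot_pow A B (ex_intro _ U (ex_intro _ k (conj Hk E)))) as (V & q & Hq & E2).
    destruct Hu as [_ Hu]. apply (Hu V q Hq). exact E2. }
  destruct (encode (length v) v (le_n _) (or_intror (conj (ex_intro _ v0 Hv0) (ex_intro _ v1 Hv1))))
    as (cn & Pcn & Ecn & Wcn).
  set (c := map Z.of_nat cn).
  assert (Pc : posz c).
  { unfold posz, c. apply Forall_forall. intros z Hz. apply in_map_iff in Hz as (a & <- & Ha).
    unfold posl in Pcn. rewrite Forall_forall in Pcn. specialize (Pcn a Ha). lia. }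
  assert (Hc : c <> []).
  { unfold c. intro H. apply map_eq_nil in H. subst cn. simpl in Wcn. rewrite Hv0 in Wcn. discriminate. }
  destruct (construct c Pc Hc) as (Q & HQ & Hper & Hnth).
  set (d := cf_digit (wQ Q)) in *.
  set (M := length c) in *.
  assert (HM : (1 <= M)%nat) by (unfold M; destruct c; [congruence|simpl; lia]).
  assert (HMe : Nat.even M = true) by (unfold M, c; rewrite length_map; exact Ecn).
  destruct (min_period_exists d (ex_intro _ 0%nat (ex_intro _ M (conj HM (fun n _ => Hper n))))) as [m Hm].
  destruct (part5_struct d M m Hper HM HMe Hm) as (P0 & q & Hq1 & Hq2 & Hq3).
  assert (Hc' : map d (seq 0 M) = c).
  { rewrite <- (list_nth_seq c) at 1. apply map_ext_in. intros j Hj. apply in_seq in Hj. apply Hnth. lia. }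
  exists Q, (word_of (map Z.to_nat (cvec d 0 m))). split; [exact HQ|]. split.
  - exists 0%nat, (cvec d 0 m). split; [|reflexivity]. exists m. split; [exact Hm|]. split; [exact P0|reflexivity].
  - change (cvec d 0 m) with (map d (seq 0 (evp m))).
    rewrite Hc' in Hq3.
    assert (Hcn : map Z.to_nat c = cn) by (unfold c; rewrite map_map; rewrite <- (map_id cn) at 2; apply map_ext; intros; apply Nat2Z.id).
    destruct q as [|[|q]]; [lia| |].
    + assert (E : map d (seq 0 (evp m)) = c) by (rewrite Hq3; unfold lpow; simpl; rewrite app_nil_r; reflexivity).
      rewrite E, Hcn, word_of_wo, Wcn. apply cyc_app.
    + exfalso. apply (Hpv (wo false (map Z.to_nat (map d (seq 0 (evp m))))) (S (S q))); [lia|].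
      rewrite <- Wcn, <- Hcn, Hq3, map_lpow. apply wo_pow.
      rewrite !length_map, length_seq. apply evp_even_b.
Qed.

Theorem lemma2p4_aux :
  (forall Q : form, in_Qplus Q -> exists w, W_rel Q w) /\
  (forall (Q Q' : form) (w w' : list LR),
      in_Qplus Q -> SL2_equiv Q Q' -> W_rel Q w -> W_rel Q' w' -> cyc_equiv w w') /\
  (forall (Q : form) (w : list LR), in_Qplus Q -> W_rel Q w -> primitive_word w) /\
  (forall (Q : form) (w : list LR), in_Qplus Q -> W_rel Q w ->
      ~ cyc_equiv w [L_] /\ ~ cyc_equiv w [R_]) /\
  (forall u : list LR, primitive_word u -> ~ cyc_equiv u [L_] -> ~ cyc_equiv u [R_] ->
      exists (Q : form) (w : list LR), in_Qplus Q /\ W_rel Q w /\ cyc_equiv w u).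
Proof.
  split; [intros; apply part1; auto|].
  split; [exact part2|].
  split; [intros; eapply part3; eauto|].
  split; [intros; eapply part4; eauto|].
  exact part5.
Qed.

End C_M3.
Import C_M3.

Theorem lemma2p4 :
  (* W(Q) is defined for every Q in Q_+ *)
  (forall Q : form, in_Qplus Q -> exists w, W_rel Q w) /\
  (* independent of the choices and of the SL_2(Z)-representative, up to ~ *)
  (forall (Q Q' : form) (w w' : list LR),
      in_Qplus Q -> SL2_equiv Q Q' -> W_rel Q w -> W_rel Q' w' -> cyc_equiv w w') /\
  (* its values are primitive words *)
  (forall (Q : form) (w : list LR), in_Qplus Q -> W_rel Q w -> primitive_word w) /\
  (* the image avoids the classes of L and R *)
  (forall (Q : form) (w : list LR), in_Qplus Q -> W_rel Q w ->
      ~ cyc_equiv w [L_] /\ ~ cyc_equiv w [R_]) /\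
  (* every other primitive class is attained *)
  (forall u : list LR, primitive_word u -> ~ cyc_equiv u [L_] -> ~ cyc_equiv u [R_] ->
      exists (Q : form) (w : list LR), in_Qplus Q /\ W_rel Q w /\ cyc_equiv w u).
Proof. exact C_M3.lemma2p4_aux. Qed.
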